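(* There exists a topological dynamical system $(X,T)$ which is a nonminimal E-system, is sensitive but not thickly sensitive, and satisfies $\mathrm{Tran}(X,T)\subsetneq \mathrm{Eq}_{\mathrm{syn}}(X,T)=X$.
   Context: $(X,\varrho)$ compact metric, $T$ continuous surjection. $S_T(U,\delta)=\{n\in\mathbb{N}:\exists x_1,x_2\in U,\ \varrho(T^nx_1,T^nx_2)>\delta\}$, $J_T(U,\delta)=\mathbb N\setminus S_T(U,\delta)$. Sensitive: there is $\delta>0$ with $S_T(U,\delta)$ infinite (equivalently nonempty for all opene $U$); thickly sensitive: there is $\delta>0$ with $S_T(U,\delta)$ thick (containing arbitrarily long blocks of consecutive integers) for all opene $U$. $\mathrm{Eq}_{\mathrm{syn}}(X,T)$: points $x$ such that for every $\varepsilon>0$ some neighborhood $U$ of $x$ has $J_T(U,\varepsilon)$ syndetic (bounded gaps). $\mathrm{Tran}(X,T)$: points with dense orbit. An E-system is a transitive system admitting a $T$-invariant Borel probability measure with full support. *)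

(* Defs.v *)
From Stdlib Require Import Reals List.
Open Scope R_scope.

Section Dyn.
Variable X : Type.
Variable d : X -> X -> R.
Variable T : X -> X.

Definition is_metric : Prop :=
  (forall x y, 0 <= d x y) /\ (forall x y, d x y = 0 <-> x = y) /\
  (forall x y, d x y = d y x) /\ (forall x y z, d x z <= d x y + d y z).

Definition is_open (U : X -> Prop) : Prop :=
  forall x, U x -> exists r, 0 < r /\ forall y, d x y < r -> U y.

Definition is_closed (F : X -> Prop) : Prop := is_open (fun x => ~ F x).

Definition opene (U : X -> Prop) : Prop := is_open U /\ exists x, U x.

Definition is_compact : Prop :=
  forall (I : Type) (U : I -> X -> Prop), (forall i, is_open (U i)) ->
    (forall x, exists i, U i x) ->
    exists l : list I, forall x, exists i, In i l /\ U i x.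

Definition continuous_map : Prop :=
  forall x eps, 0 < eps -> exists del, 0 < del /\
    forall y, d x y < del -> d (T x) (T y) < eps.

Definition surjective_map : Prop := forall y, exists x, T x = y.

Definition TDS : Prop :=
  is_metric /\ is_compact /\ continuous_map /\ surjective_map.

Definition iterT (n : nat) (x : X) : X := Nat.iter n T x.

Definition S_T (U : X -> Prop) (del : R) (n : nat) : Prop :=
  exists x1 x2, U x1 /\ U x2 /\ d (iterT n x1) (iterT n x2) > del.

Definition J_T (U : X -> Prop) (del : R) (n : nat) : Prop := ~ S_T U del n.

Definition infinite_nat (A : nat -> Prop) : Prop :=
  forall N, exists n, (N <= n)%nat /\ A n.

Definition thick (A : nat -> Prop) : Prop :=
  forall L : nat, exists a : nat, forall i, (i < L)%nat -> A (a + i)%nat.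

Definition syndetic (A : nat -> Prop) : Prop :=
  exists L : nat, forall a : nat, exists i, (i < L)%nat /\ A (a + i)%nat.

Definition sensitive : Prop :=
  exists del, 0 < del /\ forall U, opene U -> infinite_nat (S_T U del).

Definition thickly_sensitive : Prop :=
  exists del, 0 < del /\ forall U, opene U -> thick (S_T U del).

Definition Eq_syn (x : X) : Prop :=
  forall eps, 0 < eps -> exists U, is_open U /\ U x /\ syndetic (J_T U eps).

Definition Tran (x : X) : Prop :=
  forall y eps, 0 < eps -> exists n, d (iterT n x) y < eps.

Definition transitive_sys : Prop :=
  forall U V, opene U -> opene V -> exists n x, U x /\ V (iterT n x).

Definition minimal_sys : Prop :=
  forall Y : X -> Prop, is_closed Y -> (forall y, Y y -> Y (T y)) ->
    (exists y, Y y) -> forall x, Y x.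

Inductive borel : (X -> Prop) -> Prop :=
| borel_open : forall U, is_open U -> borel U
| borel_compl : forall A, borel A -> borel (fun x => ~ A x)
| borel_union : forall A : nat -> X -> Prop, (forall n, borel (A n)) ->
    borel (fun x => exists n, A n x).

(* mu is a Borel probability measure (values off Borel sets are irrelevant) *)
Definition borel_prob_measure (mu : (X -> Prop) -> R) : Prop :=
  (forall A, borel A -> 0 <= mu A) /\
  mu (fun _ => True) = 1 /\
  (forall A : nat -> X -> Prop, (forall n, borel (A n)) ->
     (forall m n x, m <> n -> A m x -> A n x -> False) ->
     infinite_sum (fun n => mu (A n)) (mu (fun x => exists n, A n x))).

Definition T_invariant (mu : (X -> Prop) -> R) : Prop :=
  forall A, borel A -> mu (fun x => A (T x)) = mu A.

Definition full_support (mu : (X -> Prop) -> R) : Prop :=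
  forall U, opene U -> 0 < mu U.

Definition E_system : Prop :=
  transitive_sys /\
  exists mu, borel_prob_measure mu /\ T_invariant mu /\ full_support mu.

End Dyn.

(* Main.v *)
Require Import Defs.
From Stdlib Require Import Reals List.
From Stdlib Require Import Lra Arith Lia Bool FunctionalExtensionality PropExtensionality.
From Stdlib Require Import Classical ClassicalEpsilon ProofIrrelevance.
Open Scope R_scope.

(* Construction: X = closure in Z_2 x {0,1}^N of the graph of z |-> (1_C(z+n))_n,
   where Z_2 is the 2-adic odometer and C = Z_2 minus a union of small balls
   around the natural numbers (a fat Cantor set); T = (z+1, shift). *)


Open Scope nat_scope.

Fixpoint val (k : nat) (z : nat -> bool) : nat :=
  match k with 0 => 0 | S k => val k z + 2^k * Nat.b2n (z k) end.

Lemma val_lt k z : val k z < 2^k.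
Proof.
  induction k; simpl; [lia|]. destruct (z k); simpl; lia.
Qed.

Lemma val_ext k z z' : (forall i, i < k -> z i = z' i) -> val k z = val k z'.
Proof.
  induction k; intros H; simpl; [auto|]. rewrite IHk by (intros; apply H; lia).
  rewrite (H k) by lia; auto.
Qed.

Lemma val_inj k z z' : val k z = val k z' -> forall i, i < k -> z i = z' i.
Proof.
  induction k; intros H i Hi; [lia|]. simpl in H.
  pose proof (val_lt k z); pose proof (val_lt k z').
  assert (Hb : Nat.b2n (z k) = Nat.b2n (z' k)).
  { destruct (z k), (z' k); simpl in *; auto; nia. }
  assert (Hv : val k z = val k z') by (rewrite Hb in H; lia).
  destruct (Nat.eq_dec i k).
  - subst. destruct (z k), (z' k); simpl in Hb; congruence.
  - apply IHk; auto; lia.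
Qed.

Lemma pow2_pos k : 0 < 2^k.
Proof. apply Nat.neq_0_lt_0, Nat.pow_nonzero; lia. Qed.

Lemma val_mod k d z : val k z = val (k + d) z mod 2^k.
Proof.
  induction d.
  - rewrite Nat.add_0_r, Nat.mod_small; auto using val_lt.
  - replace (k + S d) with (S (k + d)) by lia. simpl.
    replace (2 ^ (k + d)) with (2^k * 2^d) by (rewrite Nat.pow_add_r; auto).
    rewrite <- Nat.mul_assoc, Nat.mul_comm, Nat.Div0.mod_add. auto.
Qed.

Lemma val_mod' k k' z : k <= k' -> val k z = val k' z mod 2^k.
Proof. intros H. replace k' with (k + (k' - k)) by lia. apply val_mod. Qed.

Definition inc (z : nat -> bool) : nat -> bool :=
  fun i => xorb (z i) (Nat.eqb (val i z + 1) (2^i)).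

Lemma val_inc k z : val k (inc z) = (val k z + 1) mod 2^k.
Proof.
  induction k.
  - simpl. auto.
  - simpl val. rewrite IHk. unfold inc.
    pose proof (val_lt k z). pose proof (pow2_pos k).
    destruct (Nat.eqb_spec (val k z + 1) (2^k)) as [E|E].
    + rewrite E, Nat.Div0.mod_same. rewrite Nat.pow_succ_r'.
      destruct (z k); cbn [Nat.b2n xorb].
      * replace (val k z + 2^k * 1 + 1) with (2 * 2^k) by lia.
        rewrite Nat.Div0.mod_same. lia.
      * rewrite Nat.mod_small; lia.
    + rewrite (Nat.mod_small (val k z + 1)) by lia. rewrite xorb_false_r.
      rewrite Nat.pow_succ_r'.
      rewrite Nat.mod_small; [|destruct (z k); cbn [Nat.b2n]; lia].
      destruct (z k); cbn [Nat.b2n xorb]; lia.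
Qed.

Definition add (z : nat -> bool) (n : nat) : nat -> bool := Nat.iter n inc z.

Lemma val_add k z n : val k (add z n) = (val k z + n) mod 2^k.
Proof.
  induction n.
  - unfold add; simpl. rewrite Nat.add_0_r, Nat.mod_small; auto using val_lt.
  - unfold add in *. simpl Nat.iter. rewrite val_inc, IHn.
    rewrite Nat.Div0.add_mod_idemp_l. f_equal. lia.
Qed.

Lemma add_S z n : add z (S n) = add (inc z) n.
Proof. unfold add. rewrite Nat.iter_succ_r. auto. Qed.

Lemma add_S' z n : add z (S n) = inc (add z n).
Proof. reflexivity. Qed.

Lemma add_plus z a b : add z (a + b) = add (add z a) b.
Proof. unfold add. rewrite Nat.add_comm, Nat.iter_add. auto. Qed.

Definition dec (z : nat -> bool) : nat -> bool :=
  fun i => xorb (z i) (Nat.eqb (val i z) 0).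

Lemma val_dec k z : val k (dec z) = (val k z + (2^k - 1)) mod 2^k.
Proof.
  induction k.
  - simpl. auto.
  - simpl val. rewrite IHk. unfold dec.
    pose proof (val_lt k z). pose proof (pow2_pos k).
    rewrite Nat.pow_succ_r'.
    destruct (Nat.eqb_spec (val k z) 0) as [E|E].
    + rewrite E. rewrite (Nat.mod_small (0 + _)) by lia.
      destruct (z k); cbn [Nat.b2n xorb Nat.eqb].
      * replace (0 + 2 ^ k * 1 + (2 * 2 ^ k - 1)) with ((2^k - 1) + 1 * (2 * 2^k)) by lia.
        rewrite Nat.Div0.mod_add, Nat.mod_small; lia.
      * rewrite Nat.mod_small; lia.
    + replace (val k z + (2 ^ k - 1)) with ((val k z - 1) + 1 * 2^k) by lia.
      rewrite Nat.Div0.mod_add, Nat.mod_small by lia. rewrite xorb_false_r.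
      replace (val k z + 2 ^ k * Nat.b2n (z k) + (2 * 2 ^ k - 1)) with
        ((val k z - 1 + 2^k * Nat.b2n (z k)) + 1 * (2 * 2^k)) by lia.
      rewrite Nat.Div0.mod_add, Nat.mod_small; auto. destruct (z k); simpl; lia.
Qed.

Lemma seq_ext_val (a b : nat -> bool) : (forall k, val k a = val k b) -> a = b.
Proof.
  intros H. extensionality i. apply (val_inj (S i)); auto.
Qed.

Lemma inc_dec z : inc (dec z) = z.
Proof.
  apply seq_ext_val; intros k. rewrite val_inc, val_dec.
  pose proof (val_lt k z). pose proof (pow2_pos k).
  rewrite Nat.Div0.add_mod_idemp_l.
  replace (val k z + (2 ^ k - 1) + 1) with (val k z + 1 * 2^k) by lia.
  rewrite Nat.Div0.mod_add, Nat.mod_small; lia.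
Qed.

Definition iota (N : nat) : nat -> bool := fun i => Nat.testbit N i.

Lemma val_iota k N : val k (iota N) = N mod 2^k.
Proof.
  induction k.
  - cbn [val Nat.pow]. rewrite Nat.mod_1_r. auto.
  - simpl val. rewrite IHk. unfold iota. rewrite Nat.testbit_spec'.
    rewrite Nat.pow_succ_r', (Nat.mul_comm 2 (2^k)), Nat.Div0.mod_mul_r. auto.
Qed.

Lemma val_spec k w v : val k w = v <-> (v < 2^k /\ forall i, i < k -> w i = Nat.testbit v i).
Proof.
  split.
  - intros <-. split; [apply val_lt|]. intros i Hi.
    apply (val_inj k); auto. rewrite val_iota, Nat.mod_small; auto using val_lt.
  - intros [H1 H2]. rewrite (val_ext k w (iota v)) by auto.
    rewrite val_iota, Nat.mod_small; auto.
Qed.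

Lemma val_ones k : val k (fun _ => true) = 2^k - 1.
Proof.
  induction k; simpl val; auto. rewrite IHk. rewrite Nat.pow_succ_r'.
  pose proof (pow2_pos k). cbn [Nat.b2n]. lia.
Qed.

Lemma val_S k z : val (S k) z = val k z + 2^k * Nat.b2n (z k).
Proof. reflexivity. Qed.


Open Scope nat_scope.

Definition inO (z : nat -> bool) : Prop := exists j, val (j+2) z = j.

Definition Gb (z : nat -> bool) (n : nat) : bool :=
  if excluded_middle_informative (inO (add z n)) then false else true.

Lemma Gb_true z n : Gb z n = true <-> ~ inO (add z n).
Proof. unfold Gb; destruct excluded_middle_informative; split; intros; auto; congruence. Qed.

Lemma Gb_false z n : Gb z n = false <-> inO (add z n).
Proof. unfold Gb; destruct excluded_middle_informative; split; intros; auto; try congruence; tauto. Qed.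

Lemma Gb_inc z n : Gb (inc z) n = Gb z (S n).
Proof. unfold Gb. rewrite add_S. auto. Qed.

Definition pt : Type := ((nat -> bool) * (nat -> bool))%type.

Definition agree (p q : pt) (k : nat) : Prop :=
  forall i, i < k -> fst p i = fst q i /\ snd p i = snd q i.

Lemma agree_sym p q k : agree p q k -> agree q p k.
Proof. intros H i Hi; destruct (H i Hi); split; auto. Qed.

Lemma agree_trans p q r k : agree p q k -> agree q r k -> agree p r k.
Proof. intros H1 H2 i Hi; destruct (H1 i Hi), (H2 i Hi); split; congruence. Qed.

Lemma agree_le p q k k' : k' <= k -> agree p q k -> agree p q k'.
Proof. intros H1 H2 i Hi; apply H2; lia. Qed.

Definition inX (p : pt) : Prop := forall k, exists y, agree p (y, Gb y) k.

Lemma graph_inX y : inX (y, Gb y).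
Proof. intros k; exists y; intros i _; split; auto. Qed.

Lemma agree_val k (a b : nat -> bool) : (forall i, i < k -> a i = b i) <-> val k a = val k b.
Proof. split; [apply val_ext | apply val_inj]. Qed.

Lemma inc_agree k a b : (forall i, i < k -> a i = b i) -> forall i, i < k -> inc a i = inc b i.
Proof.
  intros H. apply agree_val. rewrite !val_inc. f_equal. f_equal. apply agree_val; auto.
Qed.

Lemma dec_agree k a b : (forall i, i < k -> a i = b i) -> forall i, i < k -> dec a i = dec b i.
Proof.
  intros H. apply agree_val. rewrite !val_dec. f_equal. f_equal. apply agree_val; auto.
Qed.

Lemma add_agree k a b n : val k a = val k b -> val k (add a n) = val k (add b n).
Proof. intros H; rewrite !val_add, H; auto. Qed.

Lemma inO_val j z : val (j+2) z = j -> inO z.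
Proof. intros H; exists j; auto. Qed.

Lemma inX_true z w i : inX (z, w) -> w i = true -> ~ inO (add z i).
Proof.
  intros HX Hw [j Hj].
  destruct (HX (S (i + j + 2))) as [y Hy].
  assert (Hyz : val (j+2) z = val (j+2) y).
  { apply agree_val. intros m Hm. destruct (Hy m ltac:(lia)); auto. }
  destruct (Hy i ltac:(lia)) as [_ Hw']. simpl in Hw'. rewrite Hw in Hw'.
  symmetry in Hw'. apply Gb_true in Hw'. apply Hw'.
  exists j. rewrite <- (add_agree _ _ _ _ Hyz). auto.
Qed.

Lemma inX_closed p : (forall k, exists q, inX q /\ agree p q k) -> inX p.
Proof.
  intros H k. destruct (H k) as [q [Hq Ha]]. destruct (Hq k) as [y Hy].
  exists y. eapply agree_trans; eauto.
Qed.


Open Scope R_scope.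

Lemma exists_least (P : nat -> Prop) : (exists n, P n) -> exists n, P n /\ forall m, (m < n)%nat -> ~ P m.
Proof.
  intros [n Hn]. revert Hn. induction n as [n IH] using lt_wf_ind. intros Hn.
  destruct (classic (exists m, (m < n)%nat /\ P m)) as [[m [Hm1 Hm2]]|Hno].
  - apply (IH m Hm1 Hm2).
  - exists n; split; auto. intros m Hm HP; apply Hno; eauto.
Qed.

Definition diff (p q : pt) (i : nat) : Prop := ~ (fst p i = fst q i /\ snd p i = snd q i).

Definition least_diff (p q : pt) (H : exists i, diff p q i) : nat :=
  proj1_sig (constructive_indefinite_description _ (exists_least _ H)).

Lemma least_diff_spec p q H : diff p q (least_diff p q H) /\
  forall m, (m < least_diff p q H)%nat -> ~ diff p q m.
Proof. unfold least_diff. destruct constructive_indefinite_description; simpl; auto. Qed.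

Definition dpt (p q : pt) : R :=
  match excluded_middle_informative (exists i, diff p q i) with
  | left H => (/2)^(least_diff p q H)
  | right _ => 0 end.

Lemma nodiff_eq p q : ~ (exists i, diff p q i) -> p = q.
Proof.
  intros H. destruct p as [a b], q as [c e].
  assert (forall i, a i = c i /\ b i = e i).
  { intros i. apply NNPP. intros Hn. apply H. exists i. exact Hn. }
  f_equal; extensionality i; apply H0.
Qed.

Lemma dpt_cases p q : (p = q /\ dpt p q = 0) \/
  (exists n, dpt p q = (/2)^n /\ diff p q n /\ forall m, (m < n)%nat -> ~ diff p q m).
Proof.
  unfold dpt. destruct excluded_middle_informative as [H|H].
  - right. exists (least_diff p q H). split; auto. apply least_diff_spec.
  - left. split; auto. apply nodiff_eq; auto.
Qed.

Lemma half_pow_pos n : 0 < (/2)^n.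
Proof. apply pow_lt; lra. Qed.

Lemma half_pow_lt n m : (n < m)%nat -> (/2)^m < (/2)^n.
Proof.
  intros H. rewrite !pow_inv. apply Rinv_lt_contravar.
  - apply Rmult_lt_0_compat; apply pow_lt; lra.
  - apply Rlt_pow; auto; lra.
Qed.

Lemma half_pow_le n m : (n <= m)%nat -> (/2)^m <= (/2)^n.
Proof.
  intros H. destruct (Nat.eq_dec n m); [subst; lra|]. left; apply half_pow_lt; lia.
Qed.

Lemma half_pow_le1 n : (/2)^n <= 1.
Proof. replace 1 with ((/2)^0) by auto. apply half_pow_le; lia. Qed.

Lemma dpt_lt p q k : dpt p q < (/2)^k <-> agree p q (S k).
Proof.
  destruct (dpt_cases p q) as [[-> ->]|[n [-> [Hd Hm]]]].
  - split; intros; [intros i _; split; auto | apply half_pow_pos].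
  - split; intros H.
    + assert (k < n)%nat.
      { destruct (le_lt_dec n k); auto. exfalso. pose proof (half_pow_le n k l). lra. }
      intros i Hi. apply NNPP. intros Hn. apply (Hm i); [lia|exact Hn].
    + assert (k < n)%nat.
      { destruct (le_lt_dec n k); auto. exfalso. apply Hd. apply H. lia. }
      apply half_pow_lt; auto.
Qed.

Lemma dpt_le p q k : agree p q k -> dpt p q <= (/2)^k.
Proof.
  intros H. destruct (dpt_cases p q) as [[-> ->]|[n [-> [Hd Hm]]]].
  - left; apply half_pow_pos.
  - apply half_pow_le. destruct (le_lt_dec k n); auto. exfalso. apply Hd. apply H. auto.
Qed.

Lemma dpt_diff0 p q : diff p q 0 -> dpt p q = 1.
Proof.
  intros H. destruct (dpt_cases p q) as [[-> _]|[n [-> [Hd Hm]]]].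
  - exfalso; apply H; auto.
  - destruct n; auto. exfalso; apply (Hm 0%nat); auto; lia.
Qed.

Lemma dpt_ge0 p q : 0 <= dpt p q.
Proof. destruct (dpt_cases p q) as [[-> ->]|[n [-> _]]]; [lra| left; apply half_pow_pos]. Qed.

Lemma dpt_refl p : dpt p p = 0.
Proof.
  destruct (dpt_cases p p) as [[_ ->]|[n [_ [Hd _]]]]; auto. exfalso; apply Hd; auto.
Qed.

Lemma dpt_eq0 p q : dpt p q = 0 -> p = q.
Proof.
  destruct (dpt_cases p q) as [[-> _]|[n [-> _]]]; auto. intros H. pose proof (half_pow_pos n). lra.
Qed.

Lemma diff_sym p q i : diff p q i <-> diff q p i.
Proof. unfold diff. split; intros H [H1 H2]; apply H; split; auto. Qed.

Lemma dpt_sym p q : dpt p q = dpt q p.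
Proof.
  destruct (dpt_cases p q) as [[-> ->]|[n [-> [Hd Hm]]]].
  - auto.
  - destruct (dpt_cases q p) as [[-> _]|[n' [-> [Hd' Hm']]]].
    + exfalso; apply Hd; auto.
    + f_equal. destruct (lt_eq_lt_dec n n') as [[H|H]|H]; auto.
      * exfalso. apply (Hm' n H). apply diff_sym; auto.
      * exfalso. apply (Hm n' H). apply diff_sym; auto.
Qed.

Lemma dpt_tri p q r : dpt p r <= dpt p q + dpt q r.
Proof.
  pose proof (dpt_ge0 p q). pose proof (dpt_ge0 q r).
  destruct (dpt_cases p r) as [[-> ->]|[n [E [Hd Hm]]]]; [lra|].
  rewrite E. destruct (Rlt_le_dec (dpt p q) ((/2)^n)) as [H1|H1]; [|lra].
  destruct (Rlt_le_dec (dpt q r) ((/2)^n)) as [H2|H2]; [|lra].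
  exfalso. apply dpt_lt in H1, H2. apply Hd.
  destruct (H1 n ltac:(lia)), (H2 n ltac:(lia)); split; congruence.
Qed.


Open Scope R_scope.

Definition X : Type := {p : pt | inX p}.
Definition dX (x y : X) : R := dpt (proj1_sig x) (proj1_sig y).

Lemma X_eq (x y : X) : proj1_sig x = proj1_sig y -> x = y.
Proof.
  destruct x as [p hp], y as [q hq]; simpl; intros ->. f_equal. apply proof_irrelevance.
Qed.

Definition Tpt (p : pt) : pt := (inc (fst p), fun i => snd p (S i)).

Lemma Tpt_inX p : inX p -> inX (Tpt p).
Proof.
  intros H k. destruct (H (S k)) as [y Hy]. exists (inc y).
  intros i Hi. simpl. split.
  - apply (inc_agree (S k)); auto. intros m Hm; apply (Hy m Hm).
  - rewrite Gb_inc. apply (Hy (S i)); lia.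
Qed.

Definition TX (x : X) : X := exist _ (Tpt (proj1_sig x)) (Tpt_inX _ (proj2_sig x)).

Definition zpt (z : nat -> bool) : X := exist _ (z, Gb z) (graph_inX z).

Lemma iter_TX n x : proj1_sig (iterT X TX n x) =
  (add (fst (proj1_sig x)) n, fun i => snd (proj1_sig x) (n + i)%nat).
Proof.
  induction n.
  - simpl. destruct (proj1_sig x); auto.
  - unfold iterT in *. simpl Nat.iter. simpl proj1_sig. rewrite IHn. unfold Tpt. simpl.
    f_equal. extensionality i. f_equal. lia.
Qed.

Lemma iter_zpt n z : iterT X TX n (zpt z) = zpt (add z n).
Proof.
  apply X_eq. rewrite iter_TX. simpl. f_equal. extensionality i.
  revert z. induction n; intros z; auto.
  rewrite add_S. simpl. rewrite <- Gb_inc. rewrite <- IHn. auto.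
Qed.

Lemma X_metric : is_metric X dX.
Proof.
  unfold is_metric, dX. split; [|split; [|split]].
  - intros; apply dpt_ge0.
  - intros x y; split; intros H.
    + apply X_eq, dpt_eq0; auto.
    + subst; apply dpt_refl.
  - intros; apply dpt_sym.
  - intros; apply dpt_tri.
Qed.

Lemma half_pow_small eps : 0 < eps -> exists k, (/2)^k < eps.
Proof.
  intros H. destruct (pow_lt_1_zero (/2) ltac:(rewrite Rabs_right; lra) eps H) as [N HN].
  exists N. specialize (HN N (le_n N)). rewrite Rabs_right in HN; auto.
  left; apply half_pow_pos.
Qed.

Lemma X_cont : continuous_map X dX TX.
Proof.
  intros x eps Heps. destruct (half_pow_small eps Heps) as [k Hk].
  exists ((/2)^(S k)). split; [apply half_pow_pos|]. intros y Hy.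
  unfold dX in *. apply dpt_lt in Hy.
  assert (dpt (proj1_sig (TX x)) (proj1_sig (TX y)) < (/2)^k); [|lra].
  apply dpt_lt. intros i Hi. simpl. unfold Tpt; simpl. split.
  - apply (inc_agree (S k)); auto. intros m Hm; apply (Hy m); lia.
  - apply (Hy (S i)); lia.
Qed.

Definition scons (b : bool) (w : nat -> bool) : nat -> bool :=
  fun i => match i with O => b | S i => w i end.

Lemma X_surj : surjective_map X TX.
Proof.
  intros [[z w] hx].
  assert (Hy : forall k, exists y, agree (z, w) (y, Gb y) k) by exact hx.
  set (bk := fun k => Gb (dec (proj1_sig (constructive_indefinite_description _ (Hy k)))) 0).
  assert (Hb : exists b, forall k, exists k', (k <= k')%nat /\ bk k' = b).
  { destruct (classic (forall k, exists k', (k <= k')%nat /\ bk k' = true)) as [H|H].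
    - exists true; auto.
    - exists false. apply not_all_ex_not in H. destruct H as [k0 Hk0].
      intros k. exists (Nat.max k k0). split; [lia|].
      destruct (bk (Nat.max k k0)) eqn:E; auto. exfalso; apply Hk0.
      exists (Nat.max k k0); split; [lia|auto]. }
  destruct Hb as [b Hb].
  assert (HX : inX (dec z, scons b w)).
  { intros k. destruct (Hb k) as [k' [Hk' Hbk]].
    unfold bk in Hbk. destruct constructive_indefinite_description as [y Hy'] in Hbk. simpl in Hbk.
    exists (dec y). intros i Hi. simpl. split.
    - apply (dec_agree k'); [|lia]. intros m Hm. apply (Hy' m Hm).
    - destruct i as [|i]; simpl; [auto|].
      rewrite <- Gb_inc, inc_dec. apply (Hy' i). lia. }
  exists (exist _ _ HX). apply X_eq. simpl. unfold Tpt; simpl. rewrite inc_dec. auto.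
Qed.


Open Scope R_scope.

Lemma find_shift (v K : nat) : exists i, (i < 2^K)%nat /\ ((v + i) mod 2^K = 0)%nat.
Proof.
  pose proof (pow2_pos K).
  destruct (Nat.eq_dec (v mod 2^K) 0) as [E|E].
  - exists 0%nat. rewrite Nat.add_0_r. split; auto.
  - exists (2^K - v mod 2^K)%nat. pose proof (Nat.mod_upper_bound v (2^K) ltac:(lia)).
    split; [lia|]. rewrite (Nat.div_mod_eq v (2^K)) at 1.
    replace (2 ^ K * (v / 2 ^ K) + v mod 2 ^ K + (2 ^ K - v mod 2 ^ K))%nat
      with ((v/2^K + 1) * 2^K)%nat by lia.
    apply Nat.Div0.mod_mul.
Qed.

Lemma open_agree (x : X) (k : nat) (U : X -> Prop) :
  (forall y, agree (proj1_sig x) (proj1_sig y) k -> U y) -> exists r, 0 < r /\ forall y, dX x y < r -> U y.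
Proof.
  intros H. exists ((/2)^k). split; [apply half_pow_pos|]. intros y Hy.
  apply H. apply dpt_lt in Hy. eapply agree_le; [|exact Hy]. lia.
Qed.

Lemma X_Eq_syn x : Eq_syn X dX TX x.
Proof.
  intros eps Heps. destruct (half_pow_small eps Heps) as [m Hm].
  set (K := (m + 2)%nat). set (zp := fst (proj1_sig x)).
  exists (fun y : X => val K (fst (proj1_sig y)) = val K zp). split; [|split; auto].
  - intros y Hy. apply open_agree with (S K). intros y' Ha. rewrite <- Hy.
    symmetry. apply agree_val. intros i Hi. apply (Ha i). lia.
  - exists (2^K)%nat. intros a. destruct (find_shift (val K zp + a) K) as [i [Hi Hmod]].
    exists i. split; auto. intros [x1 [x2 [H1 [H2 Hd]]]].
    assert (Hz : forall y : X, val K (fst (proj1_sig y)) = val K zp ->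
               val K (add (fst (proj1_sig y)) (a + i)) = 0%nat).
    { intros y Hy. rewrite val_add, Hy. rewrite Nat.add_assoc. auto. }
    assert (Hw : forall y : X, val K (fst (proj1_sig y)) = val K zp ->
               forall j, (j < m)%nat -> snd (proj1_sig y) (a + i + j)%nat = false).
    { intros y Hy j Hj. destruct (snd (proj1_sig y) (a + i + j)%nat) eqn:E; auto. exfalso.
      pose proof (Hz y Hy) as Hzy.
      destruct y as [[z w] hy]. simpl in *.
      apply (inX_true z w _ hy E). exists j. rewrite add_plus, val_add.
      rewrite (val_mod' (j+2) K) by lia. rewrite Hzy. rewrite Nat.Div0.mod_0_l.
      apply Nat.mod_small. pose proof (Nat.pow_gt_lin_r 2 (j+2) ltac:(lia)). lia. }
    assert (dX (iterT X TX (a + i) x1) (iterT X TX (a + i) x2) <= (/2)^m); [|lra].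
    unfold dX. apply dpt_le. rewrite !iter_TX. intros j Hj. simpl. split.
    + apply agree_val with K; [|lia]. rewrite !Hz; auto.
    + rewrite !Hw; auto.
Qed.

Lemma X_not_thick : ~ thickly_sensitive X dX TX.
Proof.
  intros [del [Hdel H]].
  destruct (X_Eq_syn (zpt (fun _ => false)) del Hdel) as [U [HU [HUx [L HL]]]].
  destruct (H U (conj HU (ex_intro _ _ HUx)) L) as [a Ha].
  destruct (HL a) as [i [Hi HJ]]. apply HJ, Ha, Hi.
Qed.

Lemma inO_nat z N : val (N + 2) z = N -> inO z.
Proof. intros H; exists N; auto. Qed.

Definition ones : nat -> bool := fun _ => true.

Lemma ones_C : ~ inO ones.
Proof.
  intros [j Hj]. unfold ones in Hj. rewrite val_ones in Hj.
  pose proof (Nat.pow_gt_lin_r 2 (j+2) ltac:(lia)). lia.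
Qed.

Lemma zero_O n : inO (add (fun _ => false) n).
Proof.
  exists n. rewrite val_add.
  assert (val (n+2) (fun _ => false) = 0%nat).
  { apply val_spec. split; [apply pow2_pos|]. intros i _. rewrite Nat.bits_0. auto. }
  rewrite H. simpl. apply Nat.mod_small. pose proof (Nat.pow_gt_lin_r 2 (n+2) ltac:(lia)). lia.
Qed.

Definition Yset (x : X) : Prop := forall i, snd (proj1_sig x) i = false.

Lemma X_not_minimal : ~ minimal_sys X dX TX.
Proof.
  intros H.
  assert (Hc : is_closed X dX Yset).
  { intros x Hx. unfold Yset in Hx. apply not_all_ex_not in Hx. destruct Hx as [i Hi].
    apply open_agree with (S i). intros y Ha Hy. apply Hi. destruct (Ha i ltac:(lia)) as [_ E].
    rewrite E. apply Hy. }
  assert (Hi : forall y, Yset y -> Yset (TX y)).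
  { intros y Hy i. simpl. apply Hy. }
  assert (Hne : exists y, Yset y).
  { exists (zpt (fun _ => false)). intros i. simpl. apply Gb_false. apply zero_O. }
  specialize (H Yset Hc Hi Hne (zpt ones) 0%nat). simpl in H.
  rewrite (proj2 (Gb_true ones 0)) in H; [discriminate|]. apply ones_C.
Qed.

Lemma X_not_Tran : ~ Tran X dX TX (zpt (fun _ => false)).
Proof.
  intros H. destruct (H (zpt ones) (/2) ltac:(lra)) as [n Hn].
  rewrite iter_zpt in Hn. unfold dX in Hn. rewrite dpt_diff0 in Hn; [lra|].
  unfold diff. cbn [proj1_sig zpt fst snd]. intros [_ E].
  rewrite (proj2 (Gb_false _ _)) in E.
  - rewrite (proj2 (Gb_true _ _)) in E; [discriminate|]. apply ones_C.
  - rewrite <- add_plus. apply zero_O.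
Qed.


Open Scope R_scope.

Section Compact.
Variable I : Type.
Variable U : I -> X -> Prop.
Hypothesis Uopen : forall i, is_open X dX (U i).
Hypothesis Ucov : forall x, exists i, U i x.

Definition FC (P : pt) (k : nat) : Prop :=
  exists l : list I, forall x : X, agree (proj1_sig x) P k -> exists i, In i l /\ U i x.

Definition upd (P : pt) (k : nat) (c : bool * bool) : pt :=
  (fun i => if Nat.eqb i k then fst c else fst P i,
   fun i => if Nat.eqb i k then snd c else snd P i).

Lemma upd_agree P k c : agree P (upd P k c) k.
Proof.
  intros i Hi. unfold upd; simpl. destruct (Nat.eqb_spec i k); [lia|]. auto.
Qed.

Lemma FC_split P k : ~ FC P k -> exists c, ~ FC (upd P k c) (S k).
Proof.
  intros H. apply NNPP. intros Hn.
  assert (Hall : forall c, FC (upd P k c) (S k)).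
  { intros c. apply NNPP. intros Hc. apply Hn. exists c; auto. }
  apply H.
  destruct (Hall (true,true)) as [l1 H1], (Hall (true,false)) as [l2 H2],
    (Hall (false,true)) as [l3 H3], (Hall (false,false)) as [l4 H4].
  exists (l1 ++ l2 ++ l3 ++ l4). intros x Hx.
  assert (Ha : forall c, c = (fst (proj1_sig x) k, snd (proj1_sig x) k) ->
            agree (proj1_sig x) (upd P k c) (S k)).
  { intros c Hc i Hi. unfold upd; simpl. destruct (Nat.eqb_spec i k).
    - subst. simpl. auto.
    - apply Hx. lia. }
  destruct (fst (proj1_sig x) k) eqn:E1, (snd (proj1_sig x) k) eqn:E2.
  - destruct (H1 x (Ha _ eq_refl)) as [i [Hi1 Hi2]]. exists i. split; auto.
    apply in_or_app; auto.
  - destruct (H2 x (Ha _ eq_refl)) as [i [Hi1 Hi2]]. exists i. split; auto.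
    apply in_or_app; right; apply in_or_app; auto.
  - destruct (H3 x (Ha _ eq_refl)) as [i [Hi1 Hi2]]. exists i. split; auto.
    apply in_or_app; right; apply in_or_app; right; apply in_or_app; auto.
  - destruct (H4 x (Ha _ eq_refl)) as [i [Hi1 Hi2]]. exists i. split; auto.
    apply in_or_app; right; apply in_or_app; right; apply in_or_app; auto.
Qed.

Definition step (P : pt) (k : nat) (H : ~ FC P k) : {P' : pt | ~ FC P' (S k) /\ agree P P' k}.
Proof.
  destruct (constructive_indefinite_description _ (FC_split P k H)) as [c Hc].
  exists (upd P k c). split; auto. apply upd_agree.
Defined.

Variable P0 : pt.
Hypothesis H0 : ~ FC P0 0.

Fixpoint build (k : nat) : {P : pt | ~ FC P k} :=
  match k with
  | O => exist _ P0 H0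
  | S k => let (P, H) := build k in
           exist _ (proj1_sig (step P k H)) (proj1 (proj2_sig (step P k H)))
  end.

Lemma build_S k : agree (proj1_sig (build k)) (proj1_sig (build (S k))) k.
Proof.
  simpl. destruct (build k) as [P H]. simpl. apply (proj2 (proj2_sig (step P k H))).
Qed.

Lemma build_mono k d : agree (proj1_sig (build k)) (proj1_sig (build (k + d))) k.
Proof.
  induction d.
  - rewrite Nat.add_0_r. intros i _; auto.
  - eapply agree_trans; [exact IHd|]. replace (k + S d)%nat with (S (k + d)) by lia.
    eapply agree_le; [|apply build_S]. lia.
Qed.

Definition xlim : pt :=
  (fun i => fst (proj1_sig (build (S i))) i, fun i => snd (proj1_sig (build (S i))) i).

Lemma xlim_agree k : agree xlim (proj1_sig (build k)) k.
Proof.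
  intros i Hi. unfold xlim; simpl.
  replace k with (S i + (k - S i))%nat by lia. apply build_mono. lia.
Qed.

Lemma xlim_inX : inX xlim.
Proof.
  apply inX_closed. intros k. destruct (build k) as [P HP] eqn:E.
  destruct (classic (exists x : X, agree (proj1_sig x) P k)) as [[x Hx]|Hn].
  - exists (proj1_sig x). split; [apply (proj2_sig x)|].
    eapply agree_trans; [apply (xlim_agree k)|]. rewrite E. simpl. apply agree_sym; auto.
  - exfalso. apply HP. exists nil. intros x Hx. exfalso. apply Hn; eauto.
Qed.

Lemma no_cover : False.
Proof.
  set (xs := exist _ xlim xlim_inX : X).
  destruct (Ucov xs) as [i Hi]. destruct (Uopen i xs Hi) as [r [Hr Hball]].
  destruct (half_pow_small r Hr) as [k Hk].
  destruct (build (S k)) as [P HP] eqn:E. apply HP. exists (i :: nil).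
  intros x Hx. exists i. split; [left; auto|]. apply Hball.
  unfold dX. assert (dpt (proj1_sig xs) (proj1_sig x) < (/2)^k); [|lra].
  apply dpt_lt. eapply agree_trans; [apply (xlim_agree (S k))|]. rewrite E. simpl.
  apply agree_sym; auto.
Qed.
End Compact.

Lemma X_compact : is_compact X dX.
Proof.
  intros I U Uo Uc. apply NNPP. intros Hn.
  assert (H0 : ~ FC I U (fun _ => false, fun _ => false) 0).
  { intros [l Hl]. apply Hn. exists l. intros x. apply Hl. intros i Hi; lia. }
  exact (no_cover I U Uo Uc _ H0).
Qed.


Open Scope R_scope.

Definition b2R (b : bool) : R := if b then 1 else 0.
Definition hb (t : R) : bool := if Rle_dec (/2) t then true else false.
Definition sh (t : R) : R := 2 * t - b2R (hb t).
Fixpoint dig (i : nat) (t : R) : bool :=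
  match i with O => hb t | S i => dig i (sh t) end.
Definition phi (t : R) : nat -> bool := fun i => dig i t.

Fixpoint qv (k : nat) (a : nat -> bool) : R :=
  match k with O => 0 | S k => (b2R (a 0%nat) + qv k (fun i => a (S i))) / 2 end.

Lemma qv_bounds k a : 0 <= qv k a /\ qv k a + (/2)^k <= 1.
Proof.
  revert a; induction k; intros a; simpl; [lra|].
  destruct (IHk (fun i => a (S i))). destruct (a 0%nat); simpl; lra.
Qed.

Lemma qv_ext k a a' : (forall i, (i < k)%nat -> a i = a' i) -> qv k a = qv k a'.
Proof.
  revert a a'; induction k; intros a a' H; simpl; auto.
  rewrite (H 0%nat) by lia. rewrite (IHk _ (fun i => a' (S i))); auto.
  intros i Hi; apply H; lia.
Qed.

Lemma sh_range t : 0 <= t < 1 -> 0 <= sh t < 1.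
Proof. unfold sh, hb; destruct Rle_dec; simpl; lra. Qed.

Lemma PL k a t : 0 <= t < 1 ->
  ((forall i, (i < k)%nat -> dig i t = a i) <-> (qv k a <= t < qv k a + (/2)^k)).
Proof.
  revert a t; induction k; intros a t Ht.
  - simpl. split; intros; [lra| lia].
  - pose proof (IHk (fun i => a (S i)) (sh t) (sh_range t Ht)) as IH.
    pose proof (qv_bounds k (fun i => a (S i))) as Hb.
    simpl qv. simpl pow.
    set (q := qv k (fun i => a (S i))) in *.
    assert (E : (forall i, (i < S k)%nat -> dig i t = a i) <->
               (hb t = a 0%nat /\ forall i, (i < k)%nat -> dig i (sh t) = a (S i))).
    { split.
      - intros H; split; [apply (H 0%nat); lia|]. intros i Hi; apply (H (S i)); lia.
      - intros [H1 H2] i Hi. destruct i; simpl; auto. apply H2; lia. }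
    rewrite E, IH. clear E IH.
    unfold sh, hb in *. destruct Rle_dec; destruct (a 0%nat); simpl;
      (split; [intros [H1 H2]; try discriminate; lra | intros H; split; [first [reflexivity | exfalso; lra] | lra]]).
Qed.

Definition shK (k : nat) (t : R) : R := Nat.iter k sh t.

Lemma dig_shK k i t : dig (k + i) t = dig i (shK k t).
Proof.
  revert t; induction k; intros t; [reflexivity|].
  change (dig (S k + i) t) with (dig (k + i) (sh t)). rewrite IHk. unfold shK.
  rewrite Nat.iter_succ_r. auto.
Qed.

Lemma shK_val k a t : 0 <= t < 1 -> (forall i, (i < k)%nat -> dig i t = a i) ->
  shK k t = 2^k * (t - qv k a).
Proof.
  revert a t; induction k; intros a t Ht H.
  - simpl. unfold shK; simpl. lra.
  - unfold shK. rewrite Nat.iter_succ_r. fold (shK k (sh t)).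
    rewrite (IHk (fun i => a (S i)) (sh t) (sh_range t Ht)).
    + assert (hb t = a 0%nat) by (apply (H 0%nat); lia).
      unfold sh. rewrite H0. simpl qv. simpl pow. field.
    + intros i Hi. apply (H (S i)); lia.
Qed.

Lemma GPL k a b t : 0 <= t < 1 -> (forall i, (i < k)%nat -> dig i t = a i) ->
  let t' := t - qv k a + qv k b in
  0 <= t' < 1 /\ (forall i, (i < k)%nat -> dig i t' = b i) /\
  (forall i, dig (k + i) t' = dig (k + i) t).
Proof.
  intros Ht Ha t'.
  pose proof (proj1 (PL k a t Ht) Ha) as Hi.
  pose proof (qv_bounds k a). pose proof (qv_bounds k b).
  assert (Ht' : 0 <= t' < 1) by (unfold t'; lra).
  assert (Hb : forall i, (i < k)%nat -> dig i t' = b i).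
  { apply (PL k b t' Ht'). unfold t'; lra. }
  split; auto. split; auto. intros i. rewrite !dig_shK.
  rewrite (shK_val k a t Ht Ha), (shK_val k b t' Ht' Hb). unfold t'. f_equal. ring.
Qed.

Definition pa (k : nat) : nat -> bool := fun i => Nat.ltb i k.
Definition pb (k : nat) : nat -> bool := fun i => Nat.eqb i k.

Lemma qv_pa k : qv (S k) (pa k) = 1 - (/2)^k.
Proof.
  induction k.
  - simpl. unfold pa; simpl. lra.
  - change (qv (S (S k)) (pa (S k))) with ((b2R (pa (S k) 0%nat) + qv (S k) (fun i => pa (S k) (S i))) / 2).
    rewrite (qv_ext _ _ (pa k)). rewrite IHk. unfold pa; simpl. field.
    intros i _. unfold pa. simpl. auto.
Qed.

Lemma qv_pb k : qv (S k) (pb k) = (/2)^(S k).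
Proof.
  induction k.
  - simpl. unfold pb; simpl. lra.
  - change (qv (S (S k)) (pb (S k))) with ((b2R (pb (S k) 0%nat) + qv (S k) (fun i => pb (S k) (S i))) / 2).
    rewrite (qv_ext _ _ (pb k)). rewrite IHk. unfold pb; simpl. field.
    intros i _. unfold pb. simpl. auto.
Qed.

Lemma qv_ones k : qv k (fun _ => true) = 1 - (/2)^k.
Proof.
  induction k; [simpl; lra|].
  change (qv (S k) (fun _ => true)) with ((b2R true + qv k (fun _ => true))/2).
  rewrite IHk. simpl. field.
Qed.

Definition Ik (k : nat) (t : R) : Prop := 1 - (/2)^k <= t < 1 - (/2)^(S k).
Definition ck (k : nat) : R := (/2)^(S k) - (1 - (/2)^k).

Lemma Ik_range k t : Ik k t -> 0 <= t < 1.
Proof. unfold Ik; pose proof (half_pow_le1 k); pose proof (half_pow_pos (S k)); lra. Qed.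

Lemma Ik_prefix k t : Ik k t -> forall i, (i < S k)%nat -> dig i t = pa k i.
Proof.
  intros H. apply (PL (S k) (pa k) t (Ik_range k t H)). rewrite qv_pa.
  unfold Ik in H. simpl in *. lra.
Qed.

Lemma ones_pow k : val k (fun _ => true) = (2^k - 1)%nat.
Proof. apply val_ones. Qed.

Lemma val_not_full k i z : (k < i)%nat -> val (S k) z = (2^k - 1)%nat -> (val i z + 1 <> 2^i)%nat.
Proof.
  intros Hki Hv He.
  assert (Hm : val (S k) z = (val i z mod 2^(S k))%nat) by (apply val_mod'; lia).
  assert (E : (val i z = (2^(S k) - 1) + (2^(i - S k) - 1) * 2^(S k))%nat).
  { assert (2^i = 2^(S k) * 2^(i - S k))%nat by (rewrite <- Nat.pow_add_r; f_equal; lia).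
    pose proof (pow2_pos (i - S k)). pose proof (pow2_pos (S k)). nia. }
  rewrite E, Nat.Div0.mod_add, Nat.mod_small in Hm.
  - rewrite Hv in Hm. simpl in Hm. pose proof (pow2_pos k). lia.
  - pose proof (pow2_pos (S k)). lia.
Qed.

Lemma phi_shift k t : Ik k t -> 0 <= t + ck k < 1 /\ phi (t + ck k) = inc (phi t).
Proof.
  intros H. pose proof (Ik_range k t H) as Ht.
  pose proof (GPL (S k) (pa k) (pb k) t Ht (Ik_prefix k t H)) as [H1 [H2 H3]].
  rewrite qv_pa, qv_pb in H1, H2, H3.
  replace (t - (1 - (/2)^k) + (/2)^(S k)) with (t + ck k) in H1, H2, H3 by (unfold ck; ring).
  split; auto. extensionality i. unfold phi, inc.
  assert (Hpre := Ik_prefix k t H).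
  destruct (lt_eq_lt_dec i k) as [[Hi|Hi]|Hi].
  - rewrite H2 by lia. rewrite Hpre by lia. unfold pa, pb.
    rewrite (proj2 (Nat.ltb_lt i k) Hi), (proj2 (Nat.eqb_neq i k) ltac:(lia)).
    rewrite (val_ext i _ (fun _ => true)). rewrite val_ones.
    pose proof (pow2_pos i). replace (2^i - 1 + 1)%nat with (2^i)%nat by lia.
    rewrite Nat.eqb_refl. auto.
    intros j Hj. rewrite Hpre by lia. unfold pa. apply Nat.ltb_lt. lia.
  - subst i. rewrite H2 by lia. rewrite Hpre by lia. unfold pa, pb.
    rewrite Nat.ltb_irrefl, Nat.eqb_refl.
    rewrite (val_ext k _ (fun _ => true)). rewrite val_ones.
    pose proof (pow2_pos k). replace (2^k - 1 + 1)%nat with (2^k)%nat by lia.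
    rewrite Nat.eqb_refl. auto.
    intros j Hj. rewrite Hpre by lia. unfold pa. apply Nat.ltb_lt. lia.
  - replace i with (S k + (i - S k))%nat by lia. rewrite H3.
    replace (S k + (i - S k))%nat with i by lia.
    assert (Hv : val (S k) (fun j => dig j t) = (2^k - 1)%nat).
    { simpl. rewrite (val_ext k _ (fun _ => true)). rewrite val_ones.
      rewrite (Hpre k) by lia. unfold pa. rewrite Nat.ltb_irrefl. simpl. lia.
      intros j Hj. rewrite Hpre by lia. unfold pa. apply Nat.ltb_lt. lia. }
    rewrite (proj2 (Nat.eqb_neq _ _) (val_not_full k i _ Hi Hv)). rewrite xorb_false_r. auto.
Qed.

Lemma Ik_cover t : 0 <= t < 1 -> exists k, Ik k t.
Proof.
  intros Ht.
  destruct (classic (exists k, dig k t = false)) as [Hex|Hno].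
  - destruct (exists_least _ Hex) as [k [Hk Hm]]. exists k.
    assert (Hp : forall i, (i < S k)%nat -> dig i t = pa k i).
    { intros i Hi. unfold pa. destruct (Nat.eq_dec i k).
      - subst. rewrite Nat.ltb_irrefl; auto.
      - rewrite (proj2 (Nat.ltb_lt i k) ltac:(lia)). destruct (dig i t) eqn:E; auto.
        exfalso; apply (Hm i); auto; lia. }
    apply (PL (S k) (pa k) t Ht) in Hp. rewrite qv_pa in Hp. unfold Ik. simpl in *. lra.
  - exfalso. destruct (half_pow_small (1 - t) ltac:(lra)) as [K HK].
    assert (Hp : forall i, (i < K)%nat -> dig i t = true).
    { intros i _. destruct (dig i t) eqn:E; auto. exfalso; apply Hno; eauto. }
    apply (PL K (fun _ => true) t Ht) in Hp. rewrite qv_ones in Hp. lra.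
Qed.

Lemma Ik_disj k k' t : Ik k t -> Ik k' t -> k = k'.
Proof.
  unfold Ik. intros H1 H2. destruct (lt_eq_lt_dec k k') as [[H|H]|H]; auto; exfalso.
  - pose proof (half_pow_le (S k) k' H). lra.
  - pose proof (half_pow_le (S k') k H). lra.
Qed.

Definition Jk (k : nat) (s : R) : Prop := (/2)^(S k) <= s < (/2)^k.

Lemma Jk_Ik k t : Jk k (t + ck k) <-> Ik k t.
Proof. unfold Jk, Ik, ck. split; intros; lra. Qed.

Lemma Jk_range k s : Jk k s -> 0 < s < 1.
Proof.
  unfold Jk. intros H. pose proof (half_pow_pos (S k)).
  destruct k; simpl in *; [lra|]. pose proof (half_pow_le1 k). lra.
Qed.

Lemma Jk_cover s : 0 < s < 1 -> exists k, Jk k s.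
Proof.
  intros Hs. destruct (half_pow_small s ltac:(lra)) as [n Hn].
  destruct (exists_least (fun n => (/2)^n <= s) (ex_intro _ n (Rlt_le _ _ Hn))) as [m [Hm Hmin]].
  destruct m.
  - simpl in Hm; lra.
  - exists m. unfold Jk. split; [lra|]. destruct (Rlt_le_dec s ((/2)^m)); auto.
    exfalso. apply (Hmin m); [lia|]. auto.
Qed.

Lemma Jk_disj k k' s : Jk k s -> Jk k' s -> k = k'.
Proof.
  unfold Jk. intros H1 H2. destruct (lt_eq_lt_dec k k') as [[H|H]|H]; auto; exfalso.
  - pose proof (half_pow_le (S k) k' H). lra.
  - pose proof (half_pow_le (S k') k H). lra.
Qed.


Open Scope nat_scope.

Lemma EO y q : (forall i, i >= q -> y i = true) -> forall L, L >= q -> val L y = 2^L - 2^q + val q y.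
Proof.
  intros H L HL. induction HL.
  - pose proof (pow2_pos q). lia.
  - rewrite val_S, IHHL, H by lia. cbn [Nat.b2n].
    pose proof (Nat.pow_le_mono_r 2 q m ltac:(lia) HL). rewrite Nat.pow_succ_r'. lia.
Qed.

Lemma EZ y q : (forall i, i >= q -> y i = false) -> forall L, val L y = val q y mod 2^L.
Proof.
  intros H L. destruct (le_lt_dec L q).
  - apply val_mod'; auto.
  - assert (E : forall m, m >= q -> val m y = val q y).
    { intros m Hm. induction Hm; auto. simpl. rewrite IHHm, H by lia. simpl. lia. }
    rewrite E by lia. rewrite Nat.mod_small; auto. pose proof (val_lt q y).
    pose proof (Nat.pow_le_mono_r 2 q L ltac:(lia) ltac:(lia)). lia.
Qed.

Lemma pow_gt j : j < 2^j.
Proof. apply Nat.pow_gt_lin_r; lia. Qed.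

Lemma pow_big L : L >= 6 -> 2 * L + 1 <= 2^(L-1).
Proof.
  intros H. induction H.
  - simpl. lia.
  - replace (S m - 1) with (S (m - 1)) by lia. rewrite Nat.pow_succ_r'. lia.
Qed.

Lemma JPL y K L0 : exists L, L >= L0 /\ L >= K /\ L >= 6 /\
  forall n, n < K -> ~ inO (add y n) -> 2^(L-1) <= val L y + n < 2^L.
Proof.
  destruct (classic (exists q, forall i, i >= q -> y i = true)) as [[q Hq]|H1].
  - exists (Nat.max L0 (Nat.max (q+1) (Nat.max K 6))). set (L := Nat.max L0 (Nat.max (q+1) (Nat.max K 6))).
    split; [lia|split; [lia|split; [lia|]]]. intros n Hn HO.
    assert (Hs : val q y + n < 2^q).
    { destruct (lt_dec (val q y + n) (2^q)); auto. exfalso. apply HO.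
      remember (val q y + n - 2^q) as a eqn:Ha. exists a. rewrite val_add.
      pose proof (pow_gt (a+2)).
      destruct (le_lt_dec q (a+2)).
      - rewrite (EO y q Hq (a+2)) by lia.
        replace (2 ^ (a + 2) - 2 ^ q + val q y + n) with (a + 1 * 2^(a+2)).
        + rewrite Nat.Div0.mod_add, Nat.mod_small; lia.
        + pose proof (Nat.pow_le_mono_r 2 q (a+2) ltac:(lia) ltac:(lia)). lia.
      - rewrite (val_mod' (a+2) q) by lia. rewrite Nat.Div0.add_mod_idemp_l.
        replace (val q y + n) with (a + 2^(q - (a+2)) * 2^(a+2)).
        + rewrite Nat.Div0.mod_add, Nat.mod_small; lia.
        + rewrite <- Nat.pow_add_r. replace (q - (a+2) + (a+2)) with q by lia. lia. }
    rewrite (EO y q Hq L) by lia.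
    pose proof (Nat.pow_le_mono_r 2 q (L-1) ltac:(lia) ltac:(lia)).
    replace (2^L) with (2 * 2^(L-1)) by (rewrite <- Nat.pow_succ_r'; f_equal; lia). lia.
  - destruct (classic (exists q, forall i, i >= q -> y i = false)) as [[q Hq]|H2].
    + exists (Nat.max L0 (Nat.max K 6)). split; [lia|split; [lia|split; [lia|]]]. intros n Hn HO. exfalso. apply HO.
      set (a := val q y + n). exists a. rewrite val_add, (EZ y q Hq (a+2)).
      rewrite Nat.Div0.add_mod_idemp_l. apply Nat.mod_small. pose proof (pow_gt (a+2)). lia.
    + assert (Hz : forall q, exists i, i >= q /\ y i = false).
      { intros q. apply NNPP. intros Hn. apply H1. exists q. intros i Hi.
        destruct (y i) eqn:E; auto. exfalso; apply Hn; eauto. }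
      assert (Ho : forall q, exists i, i >= q /\ y i = true).
      { intros q. apply NNPP. intros Hn. apply H2. exists q. intros i Hi.
        destruct (y i) eqn:E; auto. exfalso; apply Hn; eauto. }
      destruct (Hz (Nat.max L0 (Nat.max K 6))) as [i0 [Hi0 Hyi0]].
      destruct (Ho i0) as [i1 [Hi1 Hyi1]].
      destruct (exists_least (fun i => i >= i0 /\ y i = true) (ex_intro _ i1 (conj Hi1 Hyi1)))
        as [p [[Hp1 Hp2] Hpm]].
      assert (Hpi0 : p <> i0) by (intros ->; congruence).
      assert (Hyp : y (p - 1) = false).
      { destruct (y (p-1)) eqn:E; auto. exfalso. apply (Hpm (p-1)); [lia| split; auto; lia]. }
      exists (p + 1). split; [lia|split; [lia|split; [lia|]]]. intros n Hn _.
      assert (Ev : val (p+1) y = val (p-1) y + 2^p).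
      { replace (p + 1) with (S (S (p - 1))) by lia. rewrite !val_S. rewrite Hyp.
        replace (S (p - 1)) with p by lia. rewrite Hp2. cbn [Nat.b2n]. lia. }
      rewrite Ev. pose proof (val_lt (p-1) y). pose proof (pow_gt (p-1)).
      replace (p + 1 - 1) with p by lia.
      replace (2^(p+1)) with (2 * 2^p) by (rewrite Nat.add_comm; simpl; lia).
      replace (2^p) with (2 * 2^(p-1)) by (rewrite <- Nat.pow_succ_r'; f_equal; lia). lia.
Qed.


Open Scope R_scope.

Section Meas.
Variable lam : (R -> Prop) -> R.
Variable mble : (R -> Prop) -> Prop.
Hypothesis mble_Ico : forall a b, mble (fun x => a <= x < b).
Hypothesis mble_C : forall D, mble D -> mble (fun x => ~ D x).
Hypothesis mble_U : forall D : nat -> R -> Prop, (forall n, mble (D n)) -> mble (fun x => exists n, D n x).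
Hypothesis mble_tr : forall D c, mble D -> mble (fun x => D (x + c)).
Hypothesis lam_Ico : forall a b, a <= b -> lam (fun x => a <= x < b) = b - a.
Hypothesis lam_ge0 : forall D, 0 <= lam D.
Hypothesis lam_sigma : forall D : nat -> R -> Prop, (forall n, mble (D n)) ->
  (forall n x, D n x -> 0 <= x < 1) -> (forall m n x, m <> n -> D m x -> D n x -> False) ->
  infinite_sum (fun n => lam (D n)) (lam (fun x => exists n, D n x)).
Hypothesis lam_tr : forall D c, mble D -> lam (fun x => D (x + c)) = lam D.
Lemma set_ext (D E : R -> Prop) : (forall x, D x <-> E x) -> D = E.
Proof. intros H. extensionality x. apply propositional_extensionality. auto. Qed.

Lemma mble_ext D E : (forall x, D x <-> E x) -> mble D -> mble E.
Proof. intros H; rewrite (set_ext D E H); auto. Qed.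

Lemma lam_ext D E : (forall x, D x <-> E x) -> lam D = lam E.
Proof. intros H; rewrite (set_ext D E H); auto. Qed.

Lemma mble_empty : mble (fun _ => False).
Proof. apply mble_ext with (fun x => 0 <= x < 0); [intros; split; lra|auto]. Qed.

Lemma lam_empty : lam (fun _ => False) = 0.
Proof. rewrite (lam_ext _ (fun x => 0 <= x < 0)); [rewrite lam_Ico; lra|intros; split; lra]. Qed.

Lemma lam_empty' D : (forall x, ~ D x) -> lam D = 0.
Proof. intros H. rewrite <- lam_empty. apply lam_ext. intros x; split; [apply H|tauto]. Qed.

Lemma mble_U2 D E : mble D -> mble E -> mble (fun x => D x \/ E x).
Proof.
  intros HD HE. apply mble_ext with (fun x => exists n : nat, (if Nat.eqb n 0 then D else E) x).
  - intros x. split.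
    + intros [n Hn]. destruct (Nat.eqb n 0); auto.
    + intros [H|H]; [exists 0%nat | exists 1%nat]; auto.
  - apply mble_U. intros n. destruct (Nat.eqb n 0); auto.
Qed.

Lemma mble_I D E : mble D -> mble E -> mble (fun x => D x /\ E x).
Proof.
  intros HD HE. apply mble_ext with (fun x => ~ (~ D x \/ ~ E x)).
  - intros x; tauto.
  - apply mble_C, mble_U2; apply mble_C; auto.
Qed.

Lemma mble_const (P : Prop) D : mble D -> mble (fun x => P /\ D x).
Proof.
  intros HD. destruct (classic P) as [HP|HP].
  - apply mble_ext with D; auto. intros; tauto.
  - apply mble_ext with (fun _ => False); [intros; tauto| apply mble_empty].
Qed.

Lemma infinite_sum_eventually (f : nat -> R) (N : nat) (l : R) :
  (forall n, (n >= N)%nat -> sum_f_R0 f n = l) -> infinite_sum f l.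
Proof.
  intros H eps Heps. exists N. intros n Hn. rewrite H by lia. unfold R_dist.
  rewrite Rminus_diag, Rabs_R0; auto.
Qed.

Lemma lam_add2 D E : mble D -> mble E -> (forall x, D x -> 0 <= x < 1) ->
  (forall x, E x -> 0 <= x < 1) -> (forall x, D x -> E x -> False) ->
  lam (fun x => D x \/ E x) = lam D + lam E.
Proof.
  intros HD HE HD1 HE1 Hdisj.
  set (F := fun n : nat => match n with 0%nat => D | 1%nat => E | _ => fun _ => False end).
  assert (Hs := lam_sigma F).
  assert (Hl : lam (fun x => exists n, F n x) = lam (fun x => D x \/ E x)).
  { apply lam_ext. intros x. split.
    - intros [[|[|n]] Hn]; simpl in Hn; tauto.
    - intros [H|H]; [exists 0%nat| exists 1%nat]; auto. }
  rewrite Hl in Hs. symmetry. apply (uniqueness_sum (fun n => lam (F n))).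
  - apply infinite_sum_eventually with 1%nat. intros n Hn.
    induction n; [lia|]. destruct n.
    + simpl. auto.
    + rewrite tech5, IHn by lia. simpl. rewrite lam_empty. ring.
  - apply Hs.
    + intros [|[|n]]; simpl; auto. apply mble_empty.
    + intros [|[|n]] x; simpl; auto. tauto.
    + intros [|[|m]] [|[|n]] x Hmn; simpl; try tauto; try lia; intros; eauto.
Qed.

Lemma lam_mono D E : mble D -> mble E -> (forall x, D x -> E x) ->
  (forall x, E x -> 0 <= x < 1) -> lam D <= lam E.
Proof.
  intros HD HE Hs Hr.
  rewrite (lam_ext E (fun x => D x \/ (E x /\ ~ D x))).
  - rewrite lam_add2; auto.
    + pose proof (lam_ge0 (fun x => E x /\ ~ D x)). lra.
    + apply mble_I; auto.
    + intros x [H1 _]; auto.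
    + intros x H1 [_ H2]; auto.
  - intros x. split; [intros H; destruct (classic (D x)); auto| intros [H|[H _]]; auto].
Qed.

Lemma infinite_sum_le f l B : infinite_sum f l -> (forall N, sum_f_R0 f N <= B) -> l <= B.
Proof.
  intros Hs HB. apply Rnot_lt_le. intros Hlt.
  destruct (Hs (l - B) ltac:(lra)) as [N HN]. specialize (HN N (le_n N)). specialize (HB N).
  unfold R_dist in HN. apply Rabs_def2 in HN. lra.
Qed.

Lemma lam_subadd (D : nat -> R -> Prop) B : (forall n, mble (D n)) ->
  (forall n x, D n x -> 0 <= x < 1) -> (forall N, sum_f_R0 (fun n => lam (D n)) N <= B) ->
  lam (fun x => exists n, D n x) <= B.
Proof.
  intros HD Hr HB.
  set (D' := fun n x => D n x /\ ~ exists m, (m < n)%nat /\ D m x).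
  assert (HD' : forall n, mble (D' n)).
  { intros n. apply mble_I; auto. apply mble_C.
    apply mble_ext with (fun x => exists m, (m < n)%nat /\ D m x); [tauto|].
    apply mble_U. intros m. apply mble_const; auto. }
  assert (Hs := lam_sigma D' HD' (fun n x H => Hr n x (proj1 H))).
  assert (E : lam (fun x => exists n, D' n x) = lam (fun x => exists n, D n x)).
  { apply lam_ext. intros x. split.
    - intros [n [Hn _]]; eauto.
    - intros Hex. destruct (exists_least _ Hex) as [n [Hn Hm]]. exists n. split; auto.
      intros [m [Hm1 Hm2]]. apply (Hm m Hm1 Hm2). }
  rewrite <- E. apply (infinite_sum_le (fun n => lam (D' n))).
  - apply Hs. intros m n x Hmn [H1 H2] [H3 H4].
    destruct (lt_eq_lt_dec m n) as [[Hlt|Heq]|Hgt]; [apply H4; eauto| exfalso; apply Hmn; auto| apply H2; eauto].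
  - intros N. eapply Rle_trans; [|apply (HB N)]. apply sum_Rle. intros n _.
    apply lam_mono; auto. intros x [Hx _]; auto. apply Hr.
Qed.

Lemma mble_Ik k : mble (Ik k).
Proof. unfold Ik. apply mble_Ico. Qed.

Lemma mble_Jk k : mble (Jk k).
Proof. unfold Jk. apply mble_Ico. Qed.

Lemma lam_zero_pt D : mble D -> (forall x, D x -> x = 0) -> lam D = 0.
Proof.
  intros HD H0. apply Rle_antisym; [|apply lam_ge0].
  apply Rnot_lt_le. intros Hp. destruct (half_pow_small (lam D) Hp) as [N HN].
  assert (lam D <= lam (fun x => 0 <= x < (/2)^N)).
  { apply lam_mono; auto.
    - intros x Hx. rewrite (H0 x Hx). split; [lra|apply half_pow_pos].
    - intros x Hx. pose proof (half_pow_le1 N). lra. }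
  rewrite lam_Ico in H by (left; apply half_pow_pos). lra.
Qed.

Lemma INV D : mble D -> (forall x, D x -> 0 <= x < 1) ->
  mble (fun t => 0 <= t < 1 /\ exists k, Ik k t /\ D (t + ck k)) /\
  lam (fun t => 0 <= t < 1 /\ exists k, Ik k t /\ D (t + ck k)) = lam D.
Proof.
  intros HD HD1.
  set (F := fun k t => Ik k t /\ D (t + ck k)).
  set (G := fun k s => Jk k s /\ D s).
  assert (HF : forall k, mble (F k)) by (intros k; apply mble_I; [apply mble_Ik| apply mble_tr; auto]).
  assert (HG : forall k, mble (G k)) by (intros k; apply mble_I; [apply mble_Jk| auto]).
  assert (EF : forall t, (0 <= t < 1 /\ exists k, Ik k t /\ D (t + ck k)) <-> exists k, F k t).
  { intros t; split; [intros [_ H]; exact H|]. intros [k Hk]. split; [apply (Ik_range k), Hk|]. exists k; auto. }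
  split; [apply mble_ext with (fun t => exists k, F k t); [intros; symmetry; auto| apply mble_U; auto]|].
  rewrite (lam_ext _ _ EF).
  assert (SF := lam_sigma F HF (fun k t H => Ik_range k t (proj1 H))
     (fun m n x Hmn H1 H2 => Hmn (Ik_disj m n x (proj1 H1) (proj1 H2)))).
  assert (SG := lam_sigma G HG (fun k t H => conj (Rlt_le _ _ (proj1 (Jk_range k t (proj1 H)))) (proj2 (Jk_range k t (proj1 H))))
     (fun m n x Hmn H1 H2 => Hmn (Jk_disj m n x (proj1 H1) (proj1 H2)))).
  assert (EFG : forall k, lam (F k) = lam (G k)).
  { intros k. rewrite <- (lam_tr (G k) (ck k)) by auto. apply lam_ext. intros t. unfold F, G.
    rewrite Jk_Ik. tauto. }
  assert (E1 : lam (fun x => exists n, F n x) = lam (fun x => exists n, G n x)).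
  { apply (uniqueness_sum (fun n => lam (F n))); auto.
    replace (fun n => lam (F n)) with (fun n => lam (G n)); auto.
    extensionality n; auto. }
  rewrite E1.
  assert (E2 : lam D = lam (fun x => (exists n, G n x) \/ (D x /\ ~ exists n, Jk n x))).
  { apply lam_ext. intros x. split.
    - intros Hx. destruct (classic (exists n, Jk n x)) as [[n Hn]|Hn]; [left; exists n; split; auto| right; auto].
    - intros [[n [_ Hn]]|[Hx _]]; auto. }
  rewrite E2, lam_add2.
  - rewrite (lam_zero_pt (fun x => D x /\ ~ (exists n, Jk n x))); [ring| |].
    + apply mble_I; auto. apply mble_C, mble_U, mble_Jk.
    + intros x [Hx Hn]. destruct (HD1 x Hx). destruct H; auto. exfalso.
      apply Hn, Jk_cover. lra.
  - apply mble_U; auto.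
  - apply mble_I; auto. apply mble_C, mble_U, mble_Jk.
  - intros x [n [Hn _]]. pose proof (Jk_range n x Hn). lra.
  - intros x [Hx _]. auto.
  - intros x [n [Hn _]] [_ Hno]. apply Hno; eauto.
Qed.

Definition zset (S : (nat -> bool) -> Prop) : R -> Prop := fun t => 0 <= t < 1 /\ S (phi t).
Definition zm (S : (nat -> bool) -> Prop) : Prop := mble (zset S).
Definition mz (S : (nat -> bool) -> Prop) : R := lam (zset S).

Lemma zset_range S t : zset S t -> 0 <= t < 1.
Proof. intros [H _]; auto. Qed.

Lemma zm_ext S S' : (forall z, S z <-> S' z) -> zm S -> zm S'.
Proof. intros H. apply mble_ext. intros t. unfold zset. rewrite H. tauto. Qed.

Lemma mz_ext S S' : (forall z, S z <-> S' z) -> mz S = mz S'.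
Proof. intros H. apply lam_ext. intros t. unfold zset. rewrite H. tauto. Qed.

Lemma zm_C S : zm S -> zm (fun z => ~ S z).
Proof.
  intros H. apply mble_ext with (fun t => 0 <= t < 1 /\ ~ zset S t).
  - intros t. unfold zset. tauto.
  - apply mble_I; [apply mble_Ico| apply mble_C; auto].
Qed.

Lemma zm_U (S : nat -> (nat -> bool) -> Prop) : (forall n, zm (S n)) -> zm (fun z => exists n, S n z).
Proof.
  intros H. apply mble_ext with (fun t => exists n, zset (S n) t).
  - intros t. unfold zset. split; [intros [n [H1 H2]]; split; eauto| intros [H1 [n H2]]; eauto].
  - apply mble_U; auto.
Qed.

Lemma zm_I S S' : zm S -> zm S' -> zm (fun z => S z /\ S' z).
Proof.
  intros H H'. apply mble_ext with (fun t => zset S t /\ zset S' t).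
  - intros t; unfold zset; tauto.
  - apply mble_I; auto.
Qed.

Lemma zm_const (P : Prop) S : zm S -> zm (fun z => P /\ S z).
Proof.
  intros H. apply mble_ext with (fun t => P /\ zset S t).
  - intros t; unfold zset; tauto.
  - apply mble_const; auto.
Qed.

Lemma zm_true : zm (fun _ => True).
Proof. apply mble_ext with (fun t => 0 <= t < 1); [intros t; unfold zset; tauto| apply mble_Ico]. Qed.

Lemma mz_true : mz (fun _ => True) = 1.
Proof. unfold mz. rewrite (lam_ext _ (fun t => 0 <= t < 1)); [rewrite lam_Ico; lra| intros t; unfold zset; tauto]. Qed.

Lemma cyl_interval k v t : (v < 2^k)%nat ->
  (zset (fun z => val k z = v) t <-> qv k (iota v) <= t < qv k (iota v) + (/2)^k).
Proof.
  intros Hv. pose proof (qv_bounds k (iota v)). unfold zset. split.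
  - intros [Ht Hz]. apply (PL k (iota v) t Ht). apply val_spec in Hz. apply Hz.
  - intros Ht. assert (Ht' : 0 <= t < 1) by lra. split; auto. apply val_spec. split; auto.
    apply (PL k (iota v) t Ht'); auto.
Qed.

Lemma zm_cyl k v : zm (fun z => val k z = v).
Proof.
  destruct (lt_dec v (2^k)) as [Hv|Hv].
  - eapply mble_ext; [|apply (mble_Ico (qv k (iota v)) (qv k (iota v) + (/2)^k))].
    intros t. rewrite cyl_interval; tauto.
  - eapply mble_ext; [|apply mble_empty]. intros t. unfold zset. split; [tauto|].
    intros [_ H]. pose proof (val_lt k (phi t)). lia.
Qed.

Lemma mz_cyl k v : (v < 2^k)%nat -> mz (fun z => val k z = v) = (/2)^k.
Proof.
  intros Hv. unfold mz. rewrite (lam_ext _ (fun t => qv k (iota v) <= t < qv k (iota v) + (/2)^k)).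
  - rewrite lam_Ico; [ring|]. pose proof (half_pow_pos k); lra.
  - intros t. apply cyl_interval; auto.
Qed.

Lemma zset_inc S t : zset (fun z => S (inc z)) t <->
  (0 <= t < 1 /\ exists k, Ik k t /\ zset S (t + ck k)).
Proof.
  unfold zset. split.
  - intros [Ht HS]. split; auto. destruct (Ik_cover t Ht) as [k Hk]. exists k. split; auto.
    destruct (phi_shift k t Hk) as [H1 H2]. split; auto. rewrite H2; auto.
  - intros [Ht [k [Hk [H1 H2]]]]. split; auto. destruct (phi_shift k t Hk) as [_ H3].
    rewrite <- H3; auto.
Qed.

Lemma zm_inc S : zm S -> zm (fun z => S (inc z)) /\ mz (fun z => S (inc z)) = mz S.
Proof.
  intros H. destruct (INV (zset S) H (zset_range S)) as [H1 H2]. split.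
  - eapply mble_ext; [|exact H1]. intros t. rewrite zset_inc. tauto.
  - unfold mz. rewrite <- H2. apply lam_ext. intros t. apply zset_inc.
Qed.

Lemma zm_add S n : zm S -> zm (fun z => S (add z n)) /\ mz (fun z => S (add z n)) = mz S.
Proof.
  revert S. induction n; intros S H.
  - split; [eapply zm_ext; [|exact H]| apply mz_ext]; intros z; unfold add; simpl; tauto.
  - destruct (zm_inc S H) as [Hi Hm]. destruct (IHn _ Hi) as [H1 H2]. split.
    + eapply zm_ext; [|exact H1]. intros z. rewrite add_S'. tauto.
    + rewrite (mz_ext _ (fun z => S (inc (add z n)))) by (intros; rewrite add_S'; tauto).
      rewrite H2. auto.
Qed.

Lemma mz_mono S S' : zm S -> zm S' -> (forall z, S z -> S' z) -> mz S <= mz S'.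
Proof.
  intros H H' Hs. apply lam_mono; auto.
  - intros t [Ht Hz]; split; auto.
  - apply zset_range.
Qed.

Lemma mz_add2 S S' : zm S -> zm S' -> (forall z, S z -> S' z -> False) ->
  mz (fun z => S z \/ S' z) = mz S + mz S'.
Proof.
  intros H H' Hd. unfold mz. rewrite <- lam_add2; auto; try apply zset_range.
  - apply lam_ext. intros t; unfold zset; tauto.
  - intros t [_ H1] [_ H2]; eauto.
Qed.

Lemma mz_subadd (S : nat -> (nat -> bool) -> Prop) B : (forall n, zm (S n)) ->
  (forall N, sum_f_R0 (fun n => mz (S n)) N <= B) -> mz (fun z => exists n, S n z) <= B.
Proof.
  intros H HB. unfold mz. rewrite (lam_ext _ (fun t => exists n, zset (S n) t)).
  - apply lam_subadd; auto. intros n t Ht; apply (zset_range _ _ Ht).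
  - intros t. unfold zset. split; [intros [H1 [n H2]]; eauto| intros [n [H1 H2]]; eauto].
Qed.

Lemma mz_ge0 S : 0 <= mz S.
Proof. apply lam_ge0. Qed.

Lemma mz_pos_ex S : 0 < mz S -> exists z, S z.
Proof.
  intros H. apply NNPP. intros Hn. unfold mz in H. rewrite lam_empty' in H; [lra|].
  intros t [_ Hz]. apply Hn; eauto.
Qed.

Lemma geo_sum_eq r N : sum_f_R0 (fun j => if Nat.leb r j then (/2)^(j+2) else 0) N =
  if Nat.ltb N r then 0 else (/2)^(r+1) - (/2)^(N+2).
Proof.
  induction N.
  - simpl. destruct r; simpl; [field| auto].
  - rewrite tech5, IHN. destruct (lt_dec (S N) r) as [H|H].
    + rewrite (proj2 (Nat.ltb_lt N r)) by lia. rewrite (proj2 (Nat.ltb_lt (S N) r)) by lia.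
      rewrite (proj2 (Nat.leb_gt r (S N))) by lia. ring.
    + rewrite (proj2 (Nat.ltb_ge (S N) r)) by lia. rewrite (proj2 (Nat.leb_le r (S N))) by lia.
      destruct (Nat.eq_dec (S N) r) as [E|E].
      * rewrite (proj2 (Nat.ltb_lt N r)) by lia. subst r.
        replace (S N + 2)%nat with (S (S N + 1)) by lia. rewrite <- tech_pow_Rmult. field.
      * rewrite (proj2 (Nat.ltb_ge N r)) by lia.
        replace (S N + 2)%nat with (S (N + 2)) by lia. rewrite <- tech_pow_Rmult. field.
Qed.

Lemma geo_sum r N : sum_f_R0 (fun j => if Nat.leb r j then (/2)^(j+2) else 0) N <= (/2)^(r+1).
Proof.
  rewrite geo_sum_eq. destruct (Nat.ltb N r); [left; apply half_pow_pos|].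
  pose proof (half_pow_pos (N+2)). lra.
Qed.

Lemma zm_inOn n : zm (fun z => inO (add z n)).
Proof.
  apply zm_U. intros j. apply (proj1 (zm_add (fun z => val (j+2) z = j) n (zm_cyl _ _))).
Qed.

Lemma PN L v n : (v < 2^L)%nat -> (forall j, (j + 2 <= L)%nat -> ((v + n) mod 2^(j+2) <> j)%nat) ->
  mz (fun z => val L z = v /\ inO (add z n)) <= (/2)^(((v + n) mod 2^L) + 1).
Proof.
  intros Hv Hj. set (r := ((v + n) mod 2^L)%nat).
  rewrite (mz_ext _ (fun z => exists j, val L z = v /\ val (j+2) (add z n) = j)).
  2:{ intros z; unfold inO; split; [intros [H1 [j H2]]; eauto| intros [j [H1 H2]]; eauto]. }
  apply mz_subadd.
  - intros j. apply zm_I; [apply zm_cyl| apply (proj1 (zm_add (fun z => val (j+2) z = j) n (zm_cyl _ _)))].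
  - intros N. eapply Rle_trans; [|apply (geo_sum r N)]. apply sum_Rle. intros j _.
    destruct (le_lt_dec (j+2) L) as [Hle|Hgt].
    + assert (E : mz (fun z => val L z = v /\ val (j + 2) (add z n) = j) = 0).
      { unfold mz. apply lam_empty'. intros t [_ [H1 H2]]. apply (Hj j Hle).
        rewrite val_add, (val_mod' (j+2) L _ Hle), H1, Nat.Div0.add_mod_idemp_l in H2. auto. }
      rewrite E. destruct (Nat.leb r j); [left; apply half_pow_pos|lra].
    + destruct (Nat.leb_spec r j).
      * eapply Rle_trans; [apply (mz_mono _ (fun z => val (j+2) (add z n) = j))|].
        -- apply zm_I; [apply zm_cyl| apply (proj1 (zm_add (fun z => val (j+2) z = j) n (zm_cyl _ _)))].
        -- apply (proj1 (zm_add (fun z => val (j+2) z = j) n (zm_cyl _ _))).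
        -- intros z [_ Hz]; auto.
        -- rewrite (proj2 (zm_add (fun z => val (j+2) z = j) n (zm_cyl _ _))).
           rewrite mz_cyl by (pose proof (pow_gt (j+2)); lia). lra.
      * assert (E : mz (fun z => val L z = v /\ val (j + 2) (add z n) = j) = 0).
        { unfold mz. apply lam_empty'. intros t [_ [H1 H2]].
          assert (E1 : val L (add (phi t) n) = r) by (rewrite val_add, H1; auto).
          rewrite (val_mod' L (j+2) _ ltac:(lia)), H2, Nat.mod_small in E1; [lia|].
          pose proof (Nat.mod_upper_bound (v+n) (2^L) ltac:(pose proof (pow2_pos L); lia)). unfold r in *. lia. }
        rewrite E. lra.
Qed.

Lemma sum_ind_le K c N : 0 <= c -> sum_f_R0 (fun n => if Nat.ltb n K then c else 0) N <= INR K * c.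
Proof.
  intros Hc. assert (H : sum_f_R0 (fun n => if Nat.ltb n K then c else 0) N = INR (Nat.min (S N) K) * c).
  { induction N.
    - simpl. destruct K; simpl; [ring|]. destruct (Nat.min 0 K); simpl; ring.
    - rewrite tech5, IHN. destruct (Nat.ltb_spec (S N) K).
      + rewrite !Nat.min_l by lia. rewrite (S_INR (S N)). ring.
      + rewrite !Nat.min_r by lia. ring. }
  rewrite H. apply Rmult_le_compat_r; auto. apply le_INR. lia.
Qed.

Lemma half_pow_nat a b c : (a * 2^b <= 2^c)%nat -> INR a * (/2)^c <= (/2)^b.
Proof.
  intros H. apply le_INR in H. rewrite mult_INR, !pow_INR in H. simpl (INR 2) in H.
  rewrite !pow_inv. pose proof (pow_lt 2 b ltac:(lra)). pose proof (pow_lt 2 c ltac:(lra)).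
  apply (Rmult_le_reg_r (2^b * 2^c)); [apply Rmult_lt_0_compat; auto|].
  replace (INR a * / 2 ^ c * (2 ^ b * 2 ^ c)) with (INR a * 2^b) by (field; lra).
  replace (/ 2 ^ b * (2 ^ b * 2 ^ c)) with (2^c) by (field; lra). auto.
Qed.

Lemma JP y K L0 : exists L, (L >= L0)%nat /\ (L >= 6)%nat /\
  mz (fun z => val L z = val L y /\ exists n, (n < K)%nat /\ ~ inO (add y n) /\ inO (add z n))
    <= (/2)^(L+2).
Proof.
  destruct (JPL y K L0) as [L [HL0 [HLK [HL6 HL]]]]. exists L. split; auto. split; auto.
  set (v := val L y). set (c := (/2)^(2^(L-1) + 1)).
  set (Sn := fun n z => ((n < K)%nat /\ ~ inO (add y n)) /\ (val L z = v /\ inO (add z n))).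
  rewrite (mz_ext _ (fun z => exists n, Sn n z)).
  2:{ intros z. unfold Sn. split; [intros [H1 [n [H2 [H3 H4]]]]; eauto| intros [n [[H2 H3] [H1 H4]]]; eauto 6]. }
  eapply Rle_trans.
  - apply mz_subadd with (B := INR K * c).
    + intros n. apply zm_const, zm_I; [apply zm_cyl| apply zm_inOn].
    + intros N. eapply Rle_trans; [|apply (sum_ind_le K c N); left; apply half_pow_pos].
      apply sum_Rle. intros n _. unfold Sn.
      destruct (classic ((n < K)%nat /\ ~ inO (add y n))) as [[Hn HO]|Hno].
      * rewrite (proj2 (Nat.ltb_lt n K) Hn).
        rewrite (mz_ext _ (fun z => val L z = v /\ inO (add z n))) by (intros; tauto).
        pose proof (HL n Hn HO) as [Hr1 Hr2].
        eapply Rle_trans; [apply PN|].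
        -- apply val_lt.
        -- intros j Hj Heq. apply HO. exists j. rewrite val_add.
           rewrite (val_mod' (j+2) L y Hj). rewrite Nat.Div0.add_mod_idemp_l. auto.
        -- rewrite Nat.mod_small by auto. apply half_pow_le. unfold v. lia.
      * assert (E : mz (fun z => ((n < K)%nat /\ ~ inO (add y n)) /\ val L z = v /\ inO (add z n)) = 0).
        { unfold mz. apply lam_empty'. intros t [_ [H _]]. auto. }
        rewrite E. destruct (Nat.ltb n K); [left; apply half_pow_pos| lra].
  - unfold c. apply half_pow_nat.
    pose proof (pow_gt L). pose proof (pow_big L HL6).
    apply Nat.le_trans with (2^L * 2^(L+2))%nat; [apply Nat.mul_le_mono_r; lia|].
    rewrite <- Nat.pow_add_r. apply Nat.pow_le_mono_r; lia.
Qed.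

Lemma fin_bound y K : exists L1, forall n, (n < K)%nat -> inO (add y n) ->
  exists j, (j + 2 <= L1)%nat /\ val (j+2) (add y n) = j.
Proof.
  induction K.
  - exists 0%nat. intros; lia.
  - destruct IHK as [L1 HL1]. destruct (classic (inO (add y K))) as [[j Hj]|Hn].
    + exists (Nat.max L1 (j+2)). intros n Hn HO. destruct (Nat.eq_dec n K).
      * subst. exists j. split; auto; lia.
      * destruct (HL1 n ltac:(lia) HO) as [j' [Hj1 Hj2]]. exists j'. split; auto; lia.
    + exists L1. intros n Hn2 HO. destruct (Nat.eq_dec n K); [subst; tauto|]. apply HL1; auto; lia.
Qed.

Lemma open_ball_agree (U : X -> Prop) (x0 : X) : is_open X dX U -> U x0 ->
  exists K, forall x, agree (proj1_sig x0) (proj1_sig x) K -> U x.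
Proof.
  intros HU Hx0. destruct (HU x0 Hx0) as [r [Hr Hb]]. destruct (half_pow_small r Hr) as [K0 HK0].
  exists (S K0). intros x Ha. apply Hb. unfold dX. apply dpt_lt in Ha. lra.
Qed.

Lemma open_data (U : X -> Prop) : opene X dX U -> forall L0, exists L y (B : (nat -> bool) -> Prop),
  (L >= L0)%nat /\ (L >= 6)%nat /\ zm B /\ mz (fun z => val L z = val L y /\ B z) <= (/2)^(L+2) /\
  ~ B y /\ forall z, val L z = val L y -> ~ B z -> U (zpt z).
Proof.
  intros [HU [x0 Hx0]] L0.
  destruct (open_ball_agree U x0 HU Hx0) as [K HK].
  destruct (proj2_sig x0 K) as [y Hy].
  destruct (fin_bound y K) as [L1 HL1].
  destruct (JP y K (Nat.max L0 (Nat.max L1 K))) as [L [HL [HL6 Hm]]].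
  set (B := fun z => exists n, (n < K)%nat /\ ~ inO (add y n) /\ inO (add z n)).
  exists L, y, B. split; [lia|]. split; auto. split; [|split; [exact Hm|split]].
  - unfold B. eapply zm_ext; [|apply (zm_U (fun n z => ((n < K)%nat /\ ~ inO (add y n)) /\ inO (add z n)))].
    + intros z. split; [intros [n [[H1 H2] H3]]; eauto| intros [n [H1 [H2 H3]]]; eauto].
    + intros n. apply zm_const, zm_inOn.
  - intros [n [_ [H1 H2]]]; auto.
  - intros z Hz HB. apply HK. eapply agree_trans; [exact Hy|].
    intros i Hi. simpl. split.
    + apply (val_inj L); auto; lia.
    + destruct (classic (inO (add y i))) as [HO|HO].
      * destruct (HL1 i Hi HO) as [j [Hj1 Hj2]].
        assert (HOz : inO (add z i)).
        { exists j. rewrite val_add. rewrite (val_mod' (j+2) L z ltac:(lia)), Hz.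
          rewrite <- (val_mod' (j+2) L y ltac:(lia)). rewrite <- val_add. auto. }
        rewrite (proj2 (Gb_false y i) HO), (proj2 (Gb_false z i) HOz). auto.
      * assert (HOz : ~ inO (add z i)) by (intros H; apply HB; exists i; auto).
        rewrite (proj2 (Gb_true y i) HO), (proj2 (Gb_true z i) HOz). auto.
Qed.

Lemma zm_False : zm (fun _ => False).
Proof. eapply mble_ext; [|apply mble_empty]. intros t; unfold zset; tauto. Qed.

Lemma mz_sub2 S1 S2 : zm S1 -> zm S2 -> mz (fun z => S1 z \/ S2 z) <= mz S1 + mz S2.
Proof.
  intros H1 H2.
  set (F := fun n : nat => match n with 0%nat => S1 | 1%nat => S2 | _ => fun _ => False end).
  rewrite (mz_ext _ (fun z => exists n, F n z)).
  - apply mz_subadd.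
    + intros [|[|n]]; simpl; auto. apply zm_False.
    + intros N. destruct N.
      * simpl. pose proof (mz_ge0 S2). lra.
      * assert (E : forall M, sum_f_R0 (fun n => mz (F n)) (S M) = mz S1 + mz S2).
        { induction M; [simpl; ring|]. rewrite tech5, IHM. simpl.
          unfold mz at 3. rewrite lam_empty'; [ring| intros t [_ F0]; auto]. }
        rewrite E; lra.
  - intros z. split; [intros [H|H]; [exists 0%nat|exists 1%nat]; auto|].
    intros [[|[|n]] Hn]; simpl in Hn; tauto.
Qed.

Lemma halve d L v B e : zm B -> (v < 2^L)%nat -> mz (fun z => val L z = v /\ B z) <= e * (/2)^L ->
  exists v', (v' < 2^(L+d))%nat /\ (v' mod 2^L = v)%nat /\
    mz (fun z => val (L+d) z = v' /\ B z) <= e * (/2)^(L+d).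
Proof.
  intros HB Hv H. induction d.
  - exists v. rewrite Nat.add_0_r. split; auto. split; auto. apply Nat.mod_small; auto.
  - destruct IHd as [v' [Hlt [Hv' Hm]]].
    set (M := (L + d)%nat) in *. replace (L + S d)%nat with (S M) by (unfold M; lia).
    assert (E0 : forall z, val (S M) z = v' <-> val M z = v' /\ z M = false).
    { intros z. rewrite val_S. pose proof (val_lt M z). pose proof (pow2_pos M).
      destruct (z M); cbn [Nat.b2n]; split; intros; try lia; intuition; try discriminate; lia. }
    assert (E1 : forall z, val (S M) z = (v' + 2^M)%nat <-> val M z = v' /\ z M = true).
    { intros z. rewrite val_S. pose proof (val_lt M z). pose proof (pow2_pos M).
      destruct (z M); cbn [Nat.b2n]; split; intros; try lia; intuition; try discriminate; lia. }
    assert (Hsum : mz (fun z => val M z = v' /\ B z) =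
       mz (fun z => val (S M) z = v' /\ B z) + mz (fun z => val (S M) z = (v' + 2^M)%nat /\ B z)).
    { rewrite <- mz_add2.
      - apply mz_ext. intros z. rewrite E0, E1. destruct (z M); intuition.
      - apply zm_I; [apply zm_cyl|auto].
      - apply zm_I; [apply zm_cyl|auto].
      - intros z [H1 _] [H2 _]. rewrite H1 in H2. pose proof (pow2_pos M). lia. }
    assert (Hmod : ((v' + 2^M) mod 2^L = v)%nat).
    { unfold M. rewrite Nat.pow_add_r, Nat.mul_comm, Nat.Div0.mod_add. auto. }
    assert (Hh : e * (/2)^M = 2 * (e * (/2)^(S M))) by (simpl; field).
    destruct (Rle_lt_dec (mz (fun z => val (S M) z = v' /\ B z)) (e * (/2)^(S M))) as [Hle|Hgt].
    + exists v'. split; [rewrite Nat.pow_succ_r'; lia|]. split; auto.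
    + exists (v' + 2^M)%nat. split; [rewrite Nat.pow_succ_r'; lia|]. split; auto. lra.
Qed.

Lemma mz_cyl_split L v S1 S2 S3 : (v < 2^L)%nat -> zm S1 -> zm S2 -> zm S3 ->
  (forall z, val L z = v -> S1 z \/ S2 z \/ S3 z) -> (/2)^L <= mz S1 + mz S2 + mz S3.
Proof.
  intros Hv H1 H2 H3 Hc. rewrite <- (mz_cyl L v Hv).
  eapply Rle_trans; [apply (mz_mono _ (fun z => S1 z \/ (S2 z \/ S3 z)))|].
  - apply zm_cyl.
  - apply (zm_ext (fun z => exists n, (if Nat.eqb n 0 then S1 else if Nat.eqb n 1 then S2 else S3) z)).
    + intros z. split.
      * intros [n Hn]. destruct (Nat.eqb n 0); [auto|]. destruct (Nat.eqb n 1); auto.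
      * intros [H|[H|H]]; [exists 0%nat| exists 1%nat| exists 2%nat]; auto.
    + apply zm_U. intros n. destruct (Nat.eqb n 0); auto. destruct (Nat.eqb n 1); auto.
  - auto.
  - eapply Rle_trans; [apply mz_sub2; auto|].
    + apply (zm_ext (fun z => ~ (~ S2 z /\ ~ S3 z))); [intros; tauto|].
      apply zm_C, zm_I; apply zm_C; auto.
    + pose proof (mz_sub2 S2 S3 H2 H3). lra.
Qed.

Lemma TX_zpt z : TX (zpt z) = zpt (inc z).
Proof.
  apply X_eq. simpl. unfold Tpt. simpl. f_equal. extensionality i. rewrite Gb_inc. auto.
Qed.

Lemma X_trans : transitive_sys X dX TX.
Proof.
  intros U V HU HV.
  destruct (open_data U HU 0) as [L1 [y1 [B1 [_ [_ [HB1 [Hm1 [_ HU1]]]]]]]].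
  destruct (open_data V HV L1) as [L2 [y2 [B2 [HL [_ [HB2 [Hm2 [_ HV2]]]]]]]].
  destruct (halve (L2 - L1) L1 (val L1 y1) B1 (/4) HB1 (val_lt _ _)) as [v' [Hv'1 [Hv'2 Hv'3]]].
  { replace (/4 * (/2)^L1) with ((/2)^(L1+2)); auto. rewrite pow_add. simpl. field. }
  replace (L1 + (L2 - L1))%nat with L2 in * by lia.
  set (n := (val L2 y2 + 2^L2 - v')%nat).
  assert (Hn : forall z, val L2 z = v' -> val L2 (add z n) = val L2 y2).
  { intros z Hz. rewrite val_add, Hz. unfold n. replace (v' + (val L2 y2 + 2 ^ L2 - v'))%nat with
      (val L2 y2 + 1 * 2^L2)%nat by lia. rewrite Nat.Div0.mod_add. apply Nat.mod_small, val_lt. }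
  set (E := fun z => val L2 z = v' /\ ~ B1 z /\ ~ B2 (add z n)).
  assert (HE : exists z, E z).
  { apply mz_pos_ex.
    assert (Hc : (/2)^L2 <= mz E + mz (fun z => val L2 z = v' /\ B1 z) +
                  mz (fun z => val L2 (add z n) = val L2 y2 /\ B2 (add z n))).
    { apply mz_cyl_split with v'; auto.
      - unfold E. apply zm_I; [apply zm_cyl| apply zm_I; apply zm_C; auto].
        apply (proj1 (zm_add B2 n HB2)).
      - apply zm_I; [apply zm_cyl|auto].
      - apply (proj1 (zm_add (fun z => val L2 z = val L2 y2 /\ B2 z) n (zm_I _ _ (zm_cyl _ _) HB2))).
      - intros z Hz. unfold E. destruct (classic (B1 z)); [right; left; auto|].
        destruct (classic (B2 (add z n))); [right; right; split; auto|left; auto]. }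
    rewrite (proj2 (zm_add (fun z => val L2 z = val L2 y2 /\ B2 z) n (zm_I _ _ (zm_cyl _ _) HB2))) in Hc.
    replace ((/2)^(L2+2)) with (/4 * (/2)^L2) in Hm2 by (rewrite pow_add; simpl; field).
    pose proof (half_pow_pos L2). lra. }
  destruct HE as [z [Hz1 [Hz2 Hz3]]].
  exists n, (zpt z). split.
  - apply HU1; auto. rewrite (val_mod' L1 L2 z HL), Hz1; auto.
  - rewrite iter_zpt. apply HV2; auto.
Qed.

Lemma mod_ones a b : (b <= a)%nat -> ((2^a - 1) mod 2^b = 2^b - 1)%nat.
Proof.
  intros H. replace (2^a - 1)%nat with ((2^b - 1) + (2^(a-b) - 1) * 2^b)%nat.
  - rewrite Nat.Div0.mod_add, Nat.mod_small; auto. pose proof (pow2_pos b); lia.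
  - assert (2^a = 2^(a-b) * 2^b)%nat by (rewrite <- Nat.pow_add_r; f_equal; lia).
    pose proof (pow2_pos b). pose proof (pow2_pos (a-b)). nia.
Qed.

Lemma X_sens : sensitive X dX TX.
Proof.
  exists (/2). split; [lra|]. intros U HU N0.
  destruct (open_data U HU 0) as [L [y [B [_ [HL6 [HB [Hm [HBy HU1]]]]]]]].
  set (j := (2^L * (N0 + 1) - 1)%nat).
  pose proof (pow2_pos L) as HpL. pose proof (pow_gt L) as HgL.
  assert (Hj : (j = 2^L * N0 + (2^L - 1))%nat) by (unfold j; nia).
  set (N := (j + 2^(j+2) - val (j+2) y)%nat).
  pose proof (val_lt (j+2) y).
  assert (HyN : val (j+2) (add y N) = j).
  { rewrite val_add. unfold N. replace (val (j + 2) y + (j + 2 ^ (j + 2) - val (j + 2) y))%nat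
      with (j + 1 * 2^(j+2))%nat by lia. rewrite Nat.Div0.mod_add. apply Nat.mod_small.
    pose proof (pow_gt (j+2)). lia. }
  assert (HrN : val L (add y N) = (2^L - 1)%nat).
  { rewrite (val_mod' L (j+2)) by lia. rewrite HyN, Hj.
    rewrite Nat.mul_comm, Nat.add_comm, Nat.Div0.mod_add. apply Nat.mod_small. lia. }
  assert (HjN : (j >= N0)%nat) by nia.
  exists N. split; [unfold N; lia|].
  set (G := fun z => val L z = val L y /\ ~ B z /\ ~ inO (add z N)).
  assert (HG : exists z, G z).
  { apply mz_pos_ex.
    assert (Hc : (/2)^L <= mz G + mz (fun z => val L z = val L y /\ B z) +
                  mz (fun z => val L z = val L y /\ inO (add z N))).
    { apply mz_cyl_split with (val L y); auto.
      - apply val_lt.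
      - unfold G. apply zm_I; [apply zm_cyl| apply zm_I; apply zm_C; auto]. apply zm_inOn.
      - apply zm_I; [apply zm_cyl|auto].
      - apply zm_I; [apply zm_cyl|apply zm_inOn].
      - intros z Hz. unfold G. destruct (classic (B z)); [right; left; auto|].
        destruct (classic (inO (add z N))); [right; right; auto|left; auto]. }
    assert (Hp : mz (fun z => val L z = val L y /\ inO (add z N)) <= (/2)^(L+2)).
    { eapply Rle_trans; [apply PN|].
      - apply val_lt.
      - intros j' Hj' Heq. 
        assert (E : val (j'+2) (add y N) = j').
        { rewrite val_add, (val_mod' (j'+2) L y Hj'), Nat.Div0.add_mod_idemp_l; auto. }
        rewrite (val_mod' (j'+2) L _ Hj'), HrN, mod_ones in E by auto.
        pose proof (pow_gt (j'+2)). lia.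
      - rewrite <- val_add, HrN. apply half_pow_le. replace (2^L - 1 + 1)%nat with (2^L)%nat by lia.
        assert (L + 2 <= 2^L)%nat; [|lia].
        pose proof (pow_big L HL6). assert (2^L = 2 * 2^(L-1))%nat by (rewrite <- Nat.pow_succ_r'; f_equal; lia). lia. }
    replace ((/2)^(L+2)) with (/4 * (/2)^L) in Hm, Hp by (rewrite pow_add; simpl; field).
    pose proof (half_pow_pos L). lra. }
  destruct HG as [z [Hz1 [Hz2 Hz3]]].
  exists (zpt z), (zpt y). split; [apply HU1; auto|]. split; [apply HU1; auto|].
  rewrite !iter_zpt. unfold dX. rewrite dpt_diff0; [lra|].
  unfold diff. cbn [proj1_sig zpt fst snd]. intros [_ E].
  rewrite (proj2 (Gb_true _ _)) in E; [|exact Hz3].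
  rewrite (proj2 (Gb_false _ _)) in E; [discriminate|].
  exists j. auto.
Qed.

Lemma zm_forall K (P : nat -> (nat -> bool) -> Prop) : (forall i, zm (P i)) ->
  zm (fun z => forall i, (i < K)%nat -> P i z).
Proof.
  intros H. induction K.
  - eapply zm_ext; [|apply zm_true]. intros z; split; auto; intros; lia.
  - eapply zm_ext; [|apply (zm_I _ _ IHK (H K))]. intros z. split.
    + intros [H1 H2] i Hi. destruct (Nat.eq_dec i K); [subst; auto| apply H1; lia].
    + intros H1; split; [intros i Hi; apply H1; lia| apply H1; lia].
Qed.

Lemma zm_Gb i b : zm (fun z => Gb z i = b).
Proof.
  destruct b.
  - eapply zm_ext; [|apply (zm_C _ (zm_inOn i))]. intros z. rewrite Gb_true. tauto.
  - eapply zm_ext; [|apply (zm_inOn i)]. intros z. rewrite Gb_false. tauto.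
Qed.

Lemma zm_valGb K v : zm (fun z => val K (Gb z) = v).
Proof.
  eapply zm_ext; [|apply (zm_const (v < 2^K)%nat _ (zm_forall K (fun i z => Gb z i = Nat.testbit v i) (fun i => zm_Gb i _)))].
  intros z. rewrite val_spec. tauto.
Qed.

Lemma borel_zm A : borel X dX A -> zm (fun z => A (zpt z)).
Proof.
  intros HA. induction HA as [U HU|A HA IH|A HA IH].
  - eapply zm_ext; [|apply (zm_U (fun K z => exists v1 v2, (forall x : X, val K (fst (proj1_sig x)) = v1 /\
        val K (snd (proj1_sig x)) = v2 -> U x) /\ (val K z = v1 /\ val K (Gb z) = v2)))].
    + intros z. symmetry. split.
      * intros HUz. destruct (open_ball_agree U (zpt z) HU HUz) as [K HK].
        exists K, (val K z), (val K (Gb z)). split; auto.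
        intros x [H1 H2]. apply HK. intros i Hi. simpl. split.
        -- apply (val_inj K); auto.
        -- apply (val_inj K); auto.
      * intros [K [v1 [v2 [H1 H2]]]]. apply H1. simpl. auto.
    + intros K. apply zm_U. intros v1. apply zm_U. intros v2. apply zm_const. apply zm_I.
      * apply zm_cyl.
      * apply zm_valGb.
  - apply zm_C; auto.
  - apply zm_U; auto.
Qed.

Definition psi (t : R) : X := zpt (phi t).
Definition muX (A : X -> Prop) : R := lam (fun t => 0 <= t < 1 /\ A (psi t)).

Lemma muX_mz A : muX A = mz (fun z => A (zpt z)).
Proof. reflexivity. Qed.

Lemma X_prob : borel_prob_measure X dX muX.
Proof.
  split; [|split].
  - intros; apply lam_ge0.
  - rewrite muX_mz. rewrite <- mz_true. apply mz_ext. tauto.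
  - intros A HA Hd. unfold muX.
    rewrite (lam_ext _ (fun t => exists n, zset (fun z => A n (zpt z)) t)).
    + apply lam_sigma.
      * intros n. apply borel_zm; auto.
      * intros n t Ht. apply (zset_range _ _ Ht).
      * intros m n t Hmn [_ H1] [_ H2]. apply (Hd m n _ Hmn H1 H2).
    + intros t. unfold zset, psi. split; [intros [H1 [n H2]]; eauto| intros [n [H1 H2]]; eauto].
Qed.

Lemma X_inv : T_invariant X dX TX muX.
Proof.
  intros A HA. rewrite !muX_mz.
  rewrite (mz_ext _ (fun z => (fun z => A (zpt z)) (inc z))).
  - apply (proj2 (zm_inc (fun z => A (zpt z)) (borel_zm A HA))).
  - intros z. rewrite TX_zpt. tauto.
Qed.

Lemma X_full : full_support X dX muX.
Proof.
  intros U HU. rewrite muX_mz.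
  destruct (open_data U HU 0) as [L [y [B [_ [HL6 [HB [Hm [HBy HU1]]]]]]]].
  assert (Hc : (/2)^L <= mz (fun z => val L z = val L y /\ ~ B z) + mz (fun z => val L z = val L y /\ B z)
     + mz (fun _ => False)).
  { apply mz_cyl_split with (val L y).
    - apply val_lt.
    - apply zm_I; [apply zm_cyl| apply zm_C; auto].
    - apply zm_I; [apply zm_cyl| auto].
    - apply zm_False.
    - intros z Hz. destruct (classic (B z)); auto. }
  assert (E0 : mz (fun _ => False) = 0) by (unfold mz; apply lam_empty'; intros t [_ F0]; auto).
  assert (Hle : mz (fun z => val L z = val L y /\ ~ B z) <= mz (fun z => U (zpt z))).
  { apply mz_mono.
    - apply zm_I; [apply zm_cyl| apply zm_C; auto].
    - apply borel_zm. apply borel_open. apply HU.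
    - intros z [H1 H2]. apply HU1; auto. }
  replace ((/2)^(L+2)) with (/4 * (/2)^L) in Hm by (rewrite pow_add; simpl; field).
  pose proof (half_pow_pos L). lra.
Qed.

Lemma main_gen :
  exists (X : Type) (d : X -> X -> R) (T : X -> X),
    TDS X d T /\
    E_system X d T /\ ~ minimal_sys X d T /\
    sensitive X d T /\ ~ thickly_sensitive X d T /\
    (forall x, Eq_syn X d T x) /\
    (forall x, Tran X d T x -> Eq_syn X d T x) /\
    (exists x, Eq_syn X d T x /\ ~ Tran X d T x).
Proof.
  exists X, dX, TX.
  split; [split; [apply X_metric| split; [apply X_compact| split; [apply X_cont| apply X_surj]]]|].
  split; [split; [apply X_trans| exists muX; split; [apply X_prob| split; [apply X_inv| apply X_full]]]|].
  split; [apply X_not_minimal|].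
  split; [apply X_sens|].
  split; [apply X_not_thick|].
  split; [apply X_Eq_syn|].
  split; [intros; apply X_Eq_syn|].
  exists (zpt (fun _ => false)). split; [apply X_Eq_syn| apply X_not_Tran].
Qed.

End Meas.


Open Scope R_scope.

Module MC.
From HB Require Import structures.
From mathcomp Require Import all_boot all_order all_algebra.
From mathcomp Require Import all_classical all_reals all_analysis.
From mathcomp Require Import Rstruct.
Set Implicit Arguments. Unset Strict Implicit. Unset Printing Implicit Defensive.
Import Order.TTheory GRing.Theory Num.Theory.
Import numFieldNormedType.Exports.
Local Open Scope classical_set_scope.
Local Open Scope ring_scope.

Definition RR := Rdefinitions.R.
Definition mbleR (D : RR -> Prop) : Prop := @measurable _ (measurableTypeR RR) D.
Definition lamR (D : RR -> Prop) : RR := fine (@lebesgue_measure RR D).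

Lemma Ico_set (a b : RR) : (fun x : RR => Rle a x /\ Rlt x b) = [set` `[a, b[%R].
Proof.
  apply/funext => x /=. apply/propext. rewrite in_itv /=. split.
  - move=> [H1 H2]. by apply/andP; split; [apply/RleP | apply/RltP].
  - move/andP => [H1 H2]. by split; [apply/RleP | apply/RltP].
Qed.

Lemma mbleR_Ico a b : mbleR (fun x => Rle a x /\ Rlt x b).
Proof. rewrite /mbleR Ico_set. exact: measurable_itv. Qed.

Lemma mbleR_C D : mbleR D -> mbleR (fun x => ~ D x).
Proof. move=> HD. exact: measurableC. Qed.

Lemma mbleR_U (D : nat -> RR -> Prop) : (forall n, mbleR (D n)) -> mbleR (fun x => exists n, D n x).
Proof.
  move=> HD. have -> : (fun x => exists n, D n x) = \bigcup_n (D n : set (measurableTypeR RR)).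
  { apply/funext => x. apply/propext. split; [move=> [n Hn]; by exists n | move=> [n _ Hn]; by exists n]. }
  exact: bigcupT_measurable.
Qed.

Lemma mbleR_tr D c : mbleR D -> mbleR (fun x => D (Rplus x c)).
Proof.
move=> mD.
have mf := @measurable_realfun.measurable_funD _ (measurableTypeR RR) RR setT (fun x => x) (fun _ => c).
have h1 : measurable_fun (T:=measurableTypeR RR) (U:=Real_sort__canonical__measurable_structure_SigmaRing RR) setT (fun x => x).
  move=> _ Y mY. rewrite setTI. exact: mY.
have h2 : measurable_fun (T:=measurableTypeR RR) (U:=Real_sort__canonical__measurable_structure_SigmaRing RR) setT (fun _ => c).
  exact: measurable_cst.
have := mf h1 h2 measurableT D mD. rewrite setTI. done.
Qed.

Lemma lamR_Ico a b : Rle a b -> lamR (fun x => Rle a x /\ Rlt x b) = Rminus b a.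
Proof.
  move=> Hab. rewrite /lamR Ico_set lebesgue_measure_itv /=.
  case: ifPn => H /=; first by [].
  have : b = a.
  { move/RleP: Hab => Hab. apply/eqP. rewrite eq_le Hab andbT. by rewrite lte_fin -leNgt in H. }
  move=> ->. by rewrite /Rminus Rplus_opp_r.
Qed.

Lemma lamR_ge0 D : Rle 0 (lamR D).
Proof. apply/RleP. rewrite /lamR. apply: fine_ge0. exact: measure_ge0. Qed.

Section Shift.
Variable c : RR.
Local Open Scope ereal_scope.
Definition shiftm (A : set (measurableTypeR RR)) : \bar RR :=
  lebesgue_measure ((fun x : RR => Rplus x c) @^-1` A).

Let shiftm0 : shiftm set0 = 0.
Proof. by rewrite /shiftm preimage_set0 measure0. Qed.

Let shiftm_ge0 A : 0 <= shiftm A.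
Proof. exact: measure_ge0. Qed.

Let shiftm_sa : semi_sigma_additive shiftm.
Proof.
move=> F mF tF mUF; rewrite /shiftm preimage_bigcup.
apply: measure_semi_sigma_additive.
- move=> n. exact: (mbleR_tr c (mF n)).
- apply/trivIsetP => /= i j _ _ ij; rewrite -preimage_setI.
  by move/trivIsetP : tF => /(_ _ _ _ _ ij) ->//; rewrite preimage_set0.
- rewrite -preimage_bigcup. exact: (mbleR_tr c mUF).
Qed.

HB.instance Definition _ := isMeasure.Build _ _ _ shiftm shiftm0 shiftm_ge0 shiftm_sa.
End Shift.

Lemma lamR_tr D c : mbleR D -> lamR (fun x => D (Rplus x c)) = lamR D.
Proof.
move=> mD. rewrite /lamR.
have -> : @lebesgue_measure RR D = shiftm c D.
{ apply: lebesgue_measure_unique => //.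
  move=> X [[a b] _ <-] /=. rewrite /shiftm.
  have -> : (fun x : RR => Rplus x c) @^-1` [set` `]a, b]%R] = [set` `](a - c), (b - c)]%R].
  { apply/funext => x /=. apply/propext. rewrite !in_itv /=.
    rewrite ltrBlDr lerBrDr. by []. }
  rewrite !lebesgue_measure_itv /= !lte_fin ltrD2r.
  case: ifPn => // _. congr (_%:E). rewrite opprB addrA subrK. by []. }
by [].
Qed.

Lemma lam01_fin (A : set (measurableTypeR RR)) : measurable A -> (forall x, A x -> Rle 0 x /\ Rlt x 1) ->
  (@lebesgue_measure RR A \is a fin_num)%E.
Proof.
move=> mA HA. rewrite ge0_fin_numE; last exact: measure_ge0.
apply: (@le_lt_trans _ _ (@lebesgue_measure RR [set` `[0%R, 1%R[%R])).
- apply: le_measure; rewrite ?inE; [exact: mA | exact: measurable_itv | ].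
  move=> x /HA [h1 h2] /=. rewrite in_itv /=. apply/andP; split; [exact/RleP | exact/RltP].
- by rewrite lebesgue_measure_itv /= lte_fin ltr01 ltry.
Qed.

Lemma lamR_sigma (D : nat -> RR -> Prop) : (forall n, mbleR (D n)) ->
  (forall n x, D n x -> Rle 0 x /\ Rlt x 1) -> (forall m n x, m <> n -> D m x -> D n x -> False) ->
  infinite_sum (fun n => lamR (D n)) (lamR (fun x => exists n, D n x)).
Proof.
move=> mD HD Hdisj.
have eqU : (fun x => exists n, D n x) = \bigcup_n (D n : set (measurableTypeR RR)).
{ apply/funext => x. apply/propext. split; [move=> [n Hn]; by exists n | move=> [n _ Hn]; by exists n]. }
have tD : trivIset setT (D : nat -> set (measurableTypeR RR)).
{ move=> i j _ _ [x [H1 H2]]. apply: contrapT => Hij. exact: (Hdisj i j x Hij H1 H2). }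
have H := @measure_sigma_additive _ _ _ (@lebesgue_measure RR) D mD tD.
have finD : forall n, (@lebesgue_measure RR (D n) \is a fin_num)%E.
{ move=> n. apply: lam01_fin; [exact: mD | exact: HD]. }
have mU : measurable (\bigcup_n (D n : set (measurableTypeR RR))) by exact: bigcupT_measurable.
have finU : (@lebesgue_measure RR (\bigcup_n (D n : set (measurableTypeR RR))) \is a fin_num)%E.
{ apply: lam01_fin => // x [n _ Hn]. exact: (HD n). }
rewrite /lamR eqU.
have H' : ((fun n => \sum_(0 <= i < n) @lebesgue_measure RR (D i))%E @ \oo -->
   (fine (@lebesgue_measure RR (\bigcup_n (D n : set (measurableTypeR RR)))))%:E)%classic.
{ by rewrite fineK. }
have [_ {}H] := (fine_cvgP _ _).1 H'.
have Hs : forall N, fine (\sum_(0 <= i < N.+1) @lebesgue_measure RR (D i))%E =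
                    sum_f_R0 (fun n => fine (@lebesgue_measure RR (D n))) N.
{ elim=> [|N IH]; first by rewrite big_nat1.
  rewrite big_nat_recr //= fineD.
  - by rewrite IH.
  - rewrite ?inE sum_fin_num. apply/allP => x /mapP [i _ ->]. exact: finD.
  - rewrite ?inE. exact: finD. }
move=> eps /RltP Heps.
move/cvgrPdist_lt: H => /(_ eps Heps) [N _ HN].
exists N => n /ssrnat.leP Hn.
have := HN n.+1 (leqW Hn). rewrite /= Hs.
rewrite /R_dist => /RltP. by rewrite Rabs_minus_sym.
Qed.

End MC.

Theorem mainTheorem6 :
  exists (X : Type) (d : X -> X -> R) (T : X -> X),
    TDS X d T /\
    E_system X d T /\ ~ minimal_sys X d T /\
    sensitive X d T /\ ~ thickly_sensitive X d T /\
    (forall x, Eq_syn X d T x) /\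
    (forall x, Tran X d T x -> Eq_syn X d T x) /\
    (exists x, Eq_syn X d T x /\ ~ Tran X d T x).
Proof.
  exact (main_gen MC.lamR MC.mbleR MC.mbleR_Ico MC.mbleR_C MC.mbleR_U MC.mbleR_tr
           MC.lamR_Ico MC.lamR_ge0 MC.lamR_sigma MC.lamR_tr).
Qed.
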